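(* (Ordered SDC Resolution Completeness.) Let $N$ be a set of MSL(SDC) clauses that is saturated up to redundancy with respect to SDC-Resolution and SDC-Factoring (with the atom ordering $\prec$ and selection function $\mathrm{sel}$ below). Then $N$ is unsatisfiable if and only if $\square\in\mathrm{ground}(N)$. Moreover, if $\square\notin\mathrm{ground}(N)$, then the partial model $I_N$ satisfies $N$.
   Context: Clauses: a clause is written $\Gamma\rightarrow\Delta$ where $\Gamma,\Delta$ are finite multisets of atoms (negative resp. positive literals); $\square$ is the empty clause. Terms: a variable and a constant are straight; $f(s_1,\dots,s_n)$ is straight if $s_1,\dots,s_n$ are pairwise distinct variables except for at most one argument $s_i$ that is straight. Depth of variables/constants is $0$, depth$(f(s_1,\dots,s_n))=1+\max_i$ depth$(s_i)$; shallow = depth at most 1; linear = no variable occurs twice; complex = not a variable. Straight dismatching constraints (SDCs): an atomic SDC is $t\neq s$ with $s,t$ variable-disjoint and $s$ straight; an SDC $\pi=\bigwedge_i t_i\neq s_i$ is a finite conjunction of these. $\pi\sigma=\bigwedge_i t_i\sigma\neq s_i$. A solution of $\pi$ is a grounding substitution $\delta$ such that no $t_i\delta$ is an instance of $s_i$; solvable = has a solution. $\mathrm{norm}(\pi)$ is the normal form under: $\pi\wedge f(\vec t)\neq y\to\bot$; $\pi\wedge f(\vec t)\neq f(y_1,\dots,y_n)\to\bot$ ($y_j$ variables); $\pi\wedge f(t_1,\dots,t_n)\neq f(s_1,\dots,s_n)\to\pi\wedge t_i\neq s_i$ if $s_i$ is complex; $\pi\wedge f(\vec t)\neq g(\vec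 s)\to\pi$ for $f\neq g$; $\pi\wedge x\neq s\wedge x\neq s\sigma\to\pi\wedge x\neq s$. Constrained clauses $(C;\pi)$: ground instances are $C\delta$ with $\delta$ a solution of $\pi$ grounding all variables of $C$ and of the left-hand sides of $\pi$; $\mathrm{ground}(N)$ is the union over $N$. A Herbrand interpretation $I$ is a set of ground atoms; $I\models\Gamma\rightarrow\Delta$ (ground) iff $\Delta\cap I\neq\emptyset$ or $\Gamma\not\subseteq I$; $I\models(C;\pi)$ iff $I$ satisfies all its ground instances; $N$ is satisfiable iff it has a Herbrand model. MSL(SDC) clause: $(C;\pi)$ with $\pi$ an SDC and $C=\Gamma\rightarrow\Delta$ such that (i) all argument terms in $\Delta$ are shallow, each atom of $\Delta$ is linear and distinct atoms of $\Delta$ are variable-disjoint, (ii) all predicates are monadic, (iii) no equations in $\Delta$, (iv) no equations in $\Gamma$, or $\Gamma=\{s\approx t\}$, $\Delta$ empty and $s,t$ non-unifiable. Ordering: $\prec$ is an atom ordering (irreflexive, well-founded, total on ground atoms), extended to literals ($A\mapsto\{A\}$, $\neg A\mapsto\{A,A\}$, multiset extension) and to ground clauses (multiset extension); for ground atoms $Q(s)$, $P(t)$ with $s$ a proper subterm of $t$, $\neg Q(s)$ is not greater than $P(t)$. For a set $M$ of ground clauses, $M^{\prec C}=\{D\in M\mid D\prec C\}$. A literal $A$ is maximal [strictly maximal] in $(C\vee A;\pi)$ if some solution $\delta$ of $\pi$ gives $B\delta\preceq A\delta$ [$B\delta\prec A\delta$] for all literals $B$ of $C$. Selection: for $(S_1(t_1),\dots,S_n(t_n)\rightarrow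 P_1(s_1),\dots,P_m(s_m);\pi)$, $\mathrm{sel}(C)$ consists of those $S_i(t_i)$ with (1) $t_i$ not a variable, or (2) all $t_1,\dots,t_n$ variables and $t_i\notin\mathrm{vars}(s_1,\dots,s_m)$, or (3) $\{t_1,\dots,t_n\}\subseteq\mathrm{vars}(s_1,\dots,s_m)$ and $s_j=t_i$ for some $j$. SDC-Resolution: from variable-disjoint $(\Gamma_1\rightarrow\Delta_1,A;\pi_1)$, $(\Gamma_2,B\rightarrow\Delta_2;\pi_2)$ infer $((\Gamma_1,\Gamma_2\rightarrow\Delta_1,\Delta_2)\sigma;\mathrm{norm}((\pi_1\wedge\pi_2)\sigma))$ if $\sigma=\mathrm{mgu}(A,B)$, $\mathrm{norm}((\pi_1\wedge\pi_2)\sigma)$ is solvable, $A\sigma$ is strictly maximal in $(\Gamma_1\rightarrow\Delta_1,A;\pi_1)\sigma$ and $\mathrm{sel}(\Gamma_1\rightarrow\Delta_1,A)=\emptyset$, and either $B\in\mathrm{sel}(\Gamma_2,B\rightarrow\Delta_2)$ or ($\mathrm{sel}(\Gamma_2,B\rightarrow\Delta_2)=\emptyset$ and $\neg B\sigma$ is maximal in $(\Gamma_2,B\rightarrow\Delta_2;\pi_2)\sigma$). SDC-Factoring: from $(\Gamma\rightarrow\Delta,A,B;\pi)$ infer $((\Gamma\rightarrow\Delta,A)\sigma;\mathrm{norm}(\pi\sigma))$ if $\sigma=\mathrm{mgu}(A,B)$, $\mathrm{sel}(\Gamma\rightarrow\Delta,A,B)=\emptyset$, $A\sigma$ is maximal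 in $(\Gamma\rightarrow\Delta,A,B;\pi)\sigma$, and $\mathrm{norm}(\pi\sigma)$ is solvable. Redundancy and saturation: $(C;\pi)$ is redundant in $N$ if for every $D\in\mathrm{ground}((C;\pi))$ there are $D_1,\dots,D_n\in\mathrm{ground}(N)^{\prec D}$ with $D_1,\dots,D_n\models D$. $N$ is saturated up to redundancy if for every SDC-Resolution or SDC-Factoring inference from clauses of $N$ the conclusion $(R;\pi)$ is redundant in $N$ or $\mathrm{ground}((R;\pi))\subseteq\mathrm{ground}(N)$. Partial model: for $C\in\mathrm{ground}(N)$ let $I_C=\bigcup\{\delta_D\mid D\in\mathrm{ground}(N),D\prec C\}$, where $\delta_D=\{A\}$ if $D=\Gamma\rightarrow\Delta,A$ with $A$ strictly maximal in $D$, $\mathrm{sel}(D)=\emptyset$ and $I_D\not\models D$, and $\delta_D=\emptyset$ otherwise (for a ground instance $D=C'\delta$ of $(C';\pi')\in N$, $\mathrm{sel}(D)$ means $\mathrm{sel}(C')\delta$). $I_N=\bigcup_{C\in\mathrm{ground}(N)}\delta_C$. *)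

(* Defs.v *)
From Stdlib Require Import List Relations Permutation.
Import ListNotations.
Set Implicit Arguments.

Inductive term (F : Type) : Type :=
| Var : nat -> term F
| Fn  : F -> list (term F) -> term F.
Arguments Var {F} _.
Arguments Fn {F} _ _.

Fixpoint subst {F} (sg : nat -> term F) (t : term F) : term F :=
  match t with
  | Var x => sg x
  | Fn f ts => Fn f (map (subst sg) ts)
  end.

(* variable occurrences, with multiplicity *)
Fixpoint vars {F} (t : term F) : list nat :=
  match t with
  | Var x => [x]
  | Fn _ ts => (fix vl (l : list (term F)) : list nat :=
                  match l with [] => [] | u :: r => vars u ++ vl r end) ts
  end.

Fixpoint depth {F} (t : term F) : nat :=
  match t with
  | Var _ => 0
  | Fn _ ts => match ts with
               | [] => 0
               | _ => S ((fix dl (l : list (term F)) : nat :=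
                           match l with [] => 0 | u :: r => Nat.max (depth u) (dl r) end) ts)
               end
  end.

Fixpoint wf {F} (arity : F -> nat) (t : term F) : Prop :=
  match t with
  | Var _ => True
  | Fn f ts => length ts = arity f /\
               (fix wl (l : list (term F)) : Prop :=
                  match l with [] => True | u :: r => wf arity u /\ wl r end) ts
  end.

Definition ground {F} (t : term F) : Prop := vars t = [].
Definition shallow {F} (t : term F) : Prop := depth t <= 1.
Definition linear {F} (t : term F) : Prop := NoDup (vars t).
Definition is_var {F} (t : term F) : Prop := exists x, t = Var x.
Definition complex {F} (t : term F) : Prop := ~ is_var t.

(* straight terms (taken to be linear) *)
Inductive straight {F} : term F -> Prop :=
| st_var : forall x, straight (Var x)
| st_vars : forall f ts, linear (Fn f ts) -> Forall is_var ts -> straight (Fn f ts)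
| st_one : forall f l1 s l2, linear (Fn f (l1 ++ s :: l2)) ->
    Forall is_var l1 -> Forall is_var l2 -> straight s ->
    straight (Fn f (l1 ++ s :: l2)).

Inductive psubterm {F} : term F -> term F -> Prop :=
| psub_arg : forall u f ts, In u ts -> psubterm u (Fn f ts)
| psub_deep : forall u v f ts, In v ts -> psubterm u v -> psubterm u (Fn f ts).

Inductive atom (F P : Type) : Type :=
| Pred : P -> term F -> atom F P
| Eqn  : term F -> term F -> atom F P.
Arguments Pred {F P} _ _.
Arguments Eqn {F P} _ _.

Definition atom_args {F P} (A : atom F P) : list (term F) :=
  match A with Pred _ t => [t] | Eqn s t => [s; t] end.
Definition atom_vars {F P} (A : atom F P) : list nat := flat_map vars (atom_args A).
Definition subst_atom {F P} (sg : nat -> term F) (A : atom F P) : atom F P :=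
  match A with Pred p t => Pred p (subst sg t) | Eqn s t => Eqn (subst sg s) (subst sg t) end.
Definition wf_atom {F P} (arity : F -> nat) (A : atom F P) : Prop :=
  Forall (wf arity) (atom_args A).
Definition ground_atom {F P} (arity : F -> nat) (A : atom F P) : Prop :=
  Forall (fun t => ground t /\ wf arity t) (atom_args A).

Inductive lit (F P : Type) : Type :=
| Pos : atom F P -> lit F P
| Neg : atom F P -> lit F P.
Arguments Pos {F P} _.
Arguments Neg {F P} _.

Definition subst_lit {F P} (sg : nat -> term F) (L : lit F P) : lit F P :=
  match L with Pos A => Pos (subst_atom sg A) | Neg A => Neg (subst_atom sg A) end.

(* clause Gamma -> Delta : (Gamma, Delta), lists read as multisets *)
Definition clause (F P : Type) : Type := (list (atom F P) * list (atom F P))%type.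
Definition subst_clause {F P} (sg : nat -> term F) (C : clause F P) : clause F P :=
  (map (subst_atom sg) (fst C), map (subst_atom sg) (snd C)).
Definition clause_vars {F P} (C : clause F P) : list nat :=
  flat_map atom_vars (fst C) ++ flat_map atom_vars (snd C).
Definition lits {F P} (C : clause F P) : list (lit F P) :=
  map Neg (fst C) ++ map Pos (snd C).
Definition clause_perm {F P} (C D : clause F P) : Prop :=
  Permutation (fst C) (fst D) /\ Permutation (snd C) (snd D).
Definition empty_clause {F P} : clause F P := ([], []).

(* mul_lt lt N M  means  N < M                                         *)
Definition mul_lt {A} (lt : A -> A -> Prop) (N M : list A) : Prop :=
  exists Z X Y, Permutation M (Z ++ X) /\ Permutation N (Z ++ Y) /\ X <> [] /\
    forall y, In y Y -> exists x, In x X /\ lt y x.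

Definition lit_ms {F P} (L : lit F P) : list (atom F P) :=
  match L with Pos A => [A] | Neg A => [A; A] end.
Definition lit_lt {F P} (lt : atom F P -> atom F P -> Prop) (L1 L2 : lit F P) : Prop :=
  mul_lt lt (lit_ms L1) (lit_ms L2).
Definition lit_le {F P} (lt : atom F P -> atom F P -> Prop) (L1 L2 : lit F P) : Prop :=
  L1 = L2 \/ lit_lt lt L1 L2.
Definition clause_lt {F P} (lt : atom F P -> atom F P -> Prop) (C D : clause F P) : Prop :=
  mul_lt (lit_lt lt) (lits C) (lits D).

Definition atom_ordering {F P} (arity : F -> nat) (lt : atom F P -> atom F P -> Prop) : Prop :=
  (forall A, ~ lt A A) /\
  (forall A B C, lt A B -> lt B C -> lt A C) /\
  well_founded lt /\
  (forall A B, ground_atom arity A -> ground_atom arity B -> A <> B -> lt A B \/ lt B A) /\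
  (forall (Q Pp : P) (s t : term F), ground s -> wf arity s -> ground t -> wf arity t ->
      psubterm s t -> ~ lit_lt lt (Pos (Pred Pp t)) (Neg (Pred Q s))).

(* a constraint is a list of pairs (t, s) meaning  /\ t <> s           *)
Definition sdc (F : Type) : Type := list (term F * term F).

Definition subst_sdc {F} (sg : nat -> term F) (pi : sdc F) : sdc F :=
  map (fun c => (subst sg (fst c), snd c)) pi.
Definition sdc_lhs_vars {F} (pi : sdc F) : list nat := flat_map (fun c => vars (fst c)) pi.

Definition is_SDC {F} (arity : F -> nat) (pi : sdc F) : Prop :=
  Forall (fun c => straight (snd c) /\ wf arity (fst c) /\ wf arity (snd c) /\
                   (forall x, In x (vars (fst c)) -> ~ In x (vars (snd c)))) pi.

Definition grounding {F} (arity : F -> nat) (dl : nat -> term F) : Prop :=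
  forall x, ground (dl x) /\ wf arity (dl x).

Definition instance_of {F} (u s : term F) : Prop := exists tau, u = subst tau s.

Definition solution {F} (arity : F -> nat) (dl : nat -> term F) (pi : sdc F) : Prop :=
  grounding arity dl /\ Forall (fun c => ~ instance_of (subst dl (fst c)) (snd c)) pi.

Definition solvable {F} (arity : F -> nat) (pi : sdc F) : Prop :=
  exists dl, solution arity dl pi.

(* normalization: None stands for bottom *)
Inductive norm_step {F} : option (sdc F) -> option (sdc F) -> Prop :=
| ns_var : forall l r f ts y, Permutation l ((Fn f ts, Var y) :: r) ->
    norm_step (Some l) None
| ns_flat : forall l r f ts ys, Permutation l ((Fn f ts, Fn f ys) :: r) ->
    Forall is_var ys -> norm_step (Some l) None
| ns_dec : forall l r f ts ss i d, Permutation l ((Fn f ts, Fn f ss) :: r) ->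
    i < length ts -> i < length ss -> complex (nth i ss d) ->
    norm_step (Some l) (Some ((nth i ts d, nth i ss d) :: r))
| ns_clash : forall l r f g ts ss, Permutation l ((Fn f ts, Fn g ss) :: r) -> f <> g ->
    norm_step (Some l) (Some r)
| ns_sub : forall l r x s sg, Permutation l ((Var x, s) :: (Var x, subst sg s) :: r) ->
    norm_step (Some l) (Some ((Var x, s) :: r)).

Definition is_norm {F} (pi pi' : option (sdc F)) : Prop :=
  clos_refl_trans _ norm_step pi pi' /\ ~ exists pi'', norm_step pi' pi''.

Definition cclause (F P : Type) : Type := (clause F P * sdc F)%type.

Definition ground_instance {F P} (arity : F -> nat) (Cp : cclause F P) (D : clause F P) : Prop :=
  exists dl, solution arity dl (snd Cp) /\ D = subst_clause dl (fst Cp).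

Definition in_groundN {F P} (arity : F -> nat) (N : cclause F P -> Prop) (D : clause F P) : Prop :=
  exists Cp D', N Cp /\ ground_instance arity Cp D' /\ clause_perm D' D.

Definition gsat {F P} (I : atom F P -> Prop) (D : clause F P) : Prop :=
  (exists A, In A (snd D) /\ I A) \/ (exists A, In A (fst D) /\ ~ I A).

Definition cmodels {F P} (arity : F -> nat) (I : atom F P -> Prop) (Cp : cclause F P) : Prop :=
  forall D, ground_instance arity Cp D -> gsat I D.

Definition satisfiable {F P} (arity : F -> nat) (N : cclause F P -> Prop) : Prop :=
  exists I : atom F P -> Prop, forall Cp, N Cp -> cmodels arity I Cp.

Definition is_Pred {F P} (A : atom F P) : Prop := exists p t, A = Pred p t.

Definition unifiable {F} (s t : term F) : Prop := exists sg, subst sg s = subst sg t.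

Definition msl_clause {F P} (arity : F -> nat) (Cp : cclause F P) : Prop :=
  let '((G, D), pi) := Cp in
  is_SDC arity pi /\
  Forall (wf_atom arity) G /\ Forall (wf_atom arity) D /\
  (forall A, In A D -> Forall shallow (atom_args A) /\ NoDup (atom_vars A)) /\
  (forall A B, In A D -> In B D -> A <> B ->
      forall x, In x (atom_vars A) -> ~ In x (atom_vars B)) /\
  (* (ii) monadic: built into the atom type; (iii) *)
  Forall is_Pred D /\
  (Forall is_Pred G \/ exists s t, G = [Eqn s t] /\ D = [] /\ ~ unifiable s t).

Definition atom_arg_is_var {F P} (A : atom F P) : Prop := exists p x, A = Pred p (Var x).

Definition sel_cond {F P} (C : clause F P) (B : atom F P) : Prop :=
  let '(G, D) := C in
  let dvars := flat_map atom_vars D in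
  exists S t, B = Pred S t /\
  ( complex t
  \/ ((forall A, In A G -> atom_arg_is_var A) /\
                exists x, t = Var x /\ ~ In x dvars)
  \/ ((forall A, In A G -> exists p y, A = Pred p (Var y) /\ In y dvars) /\
                exists A, In A D /\ In t (atom_args A))).

Definition selected {F P} (C : clause F P) (B : atom F P) : Prop :=
  In B (fst C) /\ sel_cond C B.
Definition sel_empty {F P} (C : clause F P) : Prop := forall B, ~ selected C B.

Definition is_mgu {F P} (sg : nat -> term F) (A B : atom F P) : Prop :=
  subst_atom sg A = subst_atom sg B /\
  forall th, subst_atom th A = subst_atom th B ->
    exists tau, forall x, th x = subst tau (sg x).

Definition cclause_vars {F P} (Cp : cclause F P) : list nat :=
  clause_vars (fst Cp) ++ sdc_lhs_vars (snd Cp).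

Definition var_disjoint {F P} (C1 C2 : cclause F P) : Prop :=
  forall x, In x (cclause_vars C1) -> ~ In x (cclause_vars C2).

Definition rename {F P} (r : nat -> nat) (Cp : cclause F P) : cclause F P :=
  (subst_clause (fun x => Var (r x)) (fst Cp), subst_sdc (fun x => Var (r x)) (snd Cp)).
Definition is_variant {F P} (Cp Cp' : cclause F P) : Prop :=
  exists r : nat -> nat, (forall x y, r x = r y -> x = y) /\ Cp' = rename r Cp.

Definition strictly_max {F P} (arity : F -> nat) (lt : atom F P -> atom F P -> Prop)
  (L : lit F P) (rest : list (lit F P)) (pi : sdc F) : Prop :=
  exists dl, solution arity dl pi /\
    forall B, In B rest -> lit_lt lt (subst_lit dl B) (subst_lit dl L).
Definition maximal {F P} (arity : F -> nat) (lt : atom F P -> atom F P -> Prop)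
  (L : lit F P) (rest : list (lit F P)) (pi : sdc F) : Prop :=
  exists dl, solution arity dl pi /\
    forall B, In B rest -> lit_le lt (subst_lit dl B) (subst_lit dl L).

Definition sdc_resolution {F P} (arity : F -> nat) (lt : atom F P -> atom F P -> Prop)
  (C1 C2 R : cclause F P) : Prop :=
  exists G1 D1a A D1b pi1 G2a B G2b D2 pi2 sg pi',
    C1 = ((G1, D1a ++ A :: D1b), pi1) /\
    C2 = ((G2a ++ B :: G2b, D2), pi2) /\
    var_disjoint C1 C2 /\
    is_mgu sg A B /\
    is_norm (Some (subst_sdc sg (pi1 ++ pi2))) (Some pi') /\
    solvable arity pi' /\
    strictly_max arity lt (Pos (subst_atom sg A))
      (map (subst_lit sg) (lits (G1, D1a ++ D1b))) (subst_sdc sg pi1) /\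
    sel_empty (G1, D1a ++ A :: D1b) /\
    (selected (G2a ++ B :: G2b, D2) B \/
     (sel_empty (G2a ++ B :: G2b, D2) /\
      maximal arity lt (Neg (subst_atom sg B))
        (map (subst_lit sg) (lits (G2a ++ G2b, D2))) (subst_sdc sg pi2))) /\
    R = (subst_clause sg (G1 ++ G2a ++ G2b, D1a ++ D1b ++ D2), pi').

Definition sdc_factoring {F P} (arity : F -> nat) (lt : atom F P -> atom F P -> Prop)
  (C R : cclause F P) : Prop :=
  exists G Da A Db B Dc pi sg pi',
    C = ((G, Da ++ A :: Db ++ B :: Dc), pi) /\
    is_mgu sg A B /\
    sel_empty (G, Da ++ A :: Db ++ B :: Dc) /\
    maximal arity lt (Pos (subst_atom sg A))
      (map (subst_lit sg) (lits (G, Da ++ Db ++ B :: Dc))) (subst_sdc sg pi) /\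
    is_norm (Some (subst_sdc sg pi)) (Some pi') /\
    solvable arity pi' /\
    R = (subst_clause sg (G, Da ++ A :: Db ++ Dc), pi').

Definition gentails {F P} (Ds : list (clause F P)) (D : clause F P) : Prop :=
  forall I : atom F P -> Prop, (forall Di, In Di Ds -> gsat I Di) -> gsat I D.

Definition redundant {F P} (arity : F -> nat) (lt : atom F P -> atom F P -> Prop)
  (N : cclause F P -> Prop) (Cp : cclause F P) : Prop :=
  forall D, ground_instance arity Cp D ->
    exists Ds, (forall Di, In Di Ds -> in_groundN arity N Di /\ clause_lt lt Di D) /\
               gentails Ds D.

Definition ground_included {F P} (arity : F -> nat) (N : cclause F P -> Prop)
  (Cp : cclause F P) : Prop :=
  forall D, ground_instance arity Cp D -> in_groundN arity N D.

Definition saturated {F P} (arity : F -> nat) (lt : atom F P -> atom F P -> Prop)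
  (N : cclause F P -> Prop) : Prop :=
  (forall C1 C2 C1' C2' R, N C1 -> N C2 -> is_variant C1 C1' -> is_variant C2 C2' ->
     sdc_resolution arity lt C1' C2' R ->
     redundant arity lt N R \/ ground_included arity N R) /\
  (forall C R, N C -> sdc_factoring arity lt C R ->
     redundant arity lt N R \/ ground_included arity N R).

(* the ground instance of (Cp in N) under dl produces A, given the
   candidate-interpretation function Iof : ground clause -> interpretation *)
Definition produces {F P} (arity : F -> nat) (lt : atom F P -> atom F P -> Prop)
  (Iof : clause F P -> atom F P -> Prop) (Cp : cclause F P) (dl : nat -> term F)
  (A : atom F P) : Prop :=
  let D := subst_clause dl (fst Cp) in
  (exists G Da Db, D = (G, Da ++ A :: Db) /\
     forall L, In L (lits (G, Da ++ Db)) -> lit_lt lt L (Pos A)) /\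
  sel_empty (fst Cp) /\
  ~ gsat (Iof D) D.

Definition ginst {F P} (arity : F -> nat) (N : cclause F P -> Prop)
  (Cp : cclause F P) (dl : nat -> term F) : Prop :=
  N Cp /\ solution arity dl (snd Cp).

(* Iof satisfies the defining equations of I_C for all C in ground(N) *)
Definition is_partial_model_fun {F P} (arity : F -> nat) (lt : atom F P -> atom F P -> Prop)
  (N : cclause F P -> Prop) (Iof : clause F P -> atom F P -> Prop) : Prop :=
  forall C0 d0, ginst arity N C0 d0 ->
    forall A, Iof (subst_clause d0 (fst C0)) A <->
      exists Cp dl, ginst arity N Cp dl /\
        clause_lt lt (subst_clause dl (fst Cp)) (subst_clause d0 (fst C0)) /\
        produces arity lt Iof Cp dl A.

Definition I_N {F P} (arity : F -> nat) (lt : atom F P -> atom F P -> Prop)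
  (N : cclause F P -> Prop) (Iof : clause F P -> atom F P -> Prop) (A : atom F P) : Prop :=
  exists Cp dl, ginst arity N Cp dl /\ produces arity lt Iof Cp dl A.

(* Main.v *)
Require Import Defs.
From Stdlib Require Import List Relations Permutation Classical Arith Lia Wellfounded
  FunctionalExtensionality PropExtensionality.
Import ListNotations.
Set Implicit Arguments.


Section Terms.
Variable F : Type.

Fixpoint term_ind' (Pr : term F -> Prop) (HV : forall x, Pr (Var x))
  (HF : forall f ts, Forall Pr ts -> Pr (Fn f ts)) (t : term F) : Pr t :=
  match t with
  | Var x => HV x
  | Fn f ts => HF f ts ((fix go (l : list (term F)) : Forall Pr l :=
      match l with [] => Forall_nil _ | u :: r => Forall_cons u (@term_ind' Pr HV HF u) (go r) end) ts)
  end.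

Lemma vars_Fn f (ts : list (term F)) : vars (Fn f ts) = flat_map vars ts.
Proof. simpl. induction ts; simpl; [reflexivity| f_equal; exact IHts]. Qed.

Lemma wf_Fn ar f (ts : list (term F)) : wf ar (Fn f ts) <-> length ts = ar f /\ Forall (wf ar) ts.
Proof.
  simpl. split; intros [H1 H2]; split; auto; clear H1; induction ts; simpl in *; auto.
  - destruct H2; constructor; auto.
  - inversion H2; subst. split; auto. apply IHts; auto.
Qed.

Lemma subst_Fn (sg : nat -> term F) f ts : subst sg (Fn f ts) = Fn f (map (subst sg) ts).
Proof. reflexivity. Qed.

Lemma subst_comp (s1 s2 : nat -> term F) t :
  subst s2 (subst s1 t) = subst (fun x => subst s2 (s1 x)) t.
Proof.
  induction t using term_ind'; simpl; auto.
  f_equal. rewrite map_map. induction H; simpl; auto. f_equal; auto.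
Qed.

Lemma subst_ext (s1 s2 : nat -> term F) t :
  (forall x, In x (vars t) -> s1 x = s2 x) -> subst s1 t = subst s2 t.
Proof.
  induction t using term_ind'; intros E; simpl.
  - apply E; simpl; auto.
  - rewrite vars_Fn in E. f_equal. induction H; simpl; auto.
    simpl in E. f_equal.
    + apply H; intros; apply E; apply in_or_app; auto.
    + apply IHForall; intros; apply E; apply in_or_app; auto.
Qed.

Lemma subst_id (t : term F) : subst (@Var F) t = t.
Proof.
  induction t using term_ind'; simpl; auto. f_equal.
  induction H; simpl; auto. f_equal; auto.
Qed.

Lemma vars_subst (s : nat -> term F) t y :
  In y (vars (subst s t)) <-> exists x, In x (vars t) /\ In y (vars (s x)).
Proof.
  induction t using term_ind'.
  - simpl. split; [intros; exists x; auto | intros [z [[<-|[]] H]]; auto].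
  - rewrite subst_Fn, !vars_Fn. induction H; simpl.
    + split; [intros []| intros [z [[] _]]].
    + rewrite !in_app_iff, IHForall, H. split.
      * intros [[z [H1 H2]]|[z [H1 H2]]]; exists z; rewrite in_app_iff; tauto.
      * intros [z [H1 H2]]; apply in_app_iff in H1 as [H1|H1]; [left|right]; exists z; tauto.
Qed.

Lemma vars_rename (r : nat -> nat) (t : term F) :
  vars (subst (fun x => Var (r x)) t) = map r (vars t).
Proof.
  induction t using term_ind'; [reflexivity|].
  rewrite subst_Fn, !vars_Fn. induction H; simpl; auto.
  rewrite map_app, H, IHForall; auto.
Qed.

Lemma wf_subst ar (s : nat -> term F) t :
  wf ar t -> (forall x, wf ar (s x)) -> wf ar (subst s t).
Proof.
  induction t using term_ind'; intros Hw Hs; simpl; auto.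
  apply wf_Fn in Hw as [Hl Hw]. apply wf_Fn. rewrite length_map. split; auto.
  clear Hl. induction H; simpl; constructor; inversion Hw; auto.
Qed.

Lemma ground_iff (t : term F) : ground t <-> forall x, ~ In x (vars t).
Proof.
  unfold ground. split.
  - intros H x; rewrite H; auto.
  - intros H. destruct (vars t) eqn:E; auto. exfalso; apply (H n); simpl; auto.
Qed.

Lemma ground_subst ar (dl : nat -> term F) t :
  grounding ar dl -> ground (subst dl t) /\ (wf ar t -> wf ar (subst dl t)).
Proof.
  intros G. split.
  - apply ground_iff. intros y Hy. apply vars_subst in Hy as [x [_ Hx]].
    destruct (G x) as [Hg _]. exact (proj1 (ground_iff (dl x)) Hg y Hx).
  - intros W. apply wf_subst; auto. intros x; apply G.
Qed.

Lemma subst_rename_inj (r : nat -> nat) (t1 t2 : term F) :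
  (forall x y, r x = r y -> x = y) ->
  subst (fun x => Var (r x)) t1 = subst (fun x => Var (r x)) t2 -> t1 = t2.
Proof.
  intros Hr. revert t2. induction t1 using term_ind'; intros t2 E; destruct t2; simpl in E;
    try discriminate.
  - inversion E. f_equal; auto.
  - inversion E as [[Hf Hl]]; subst. f_equal. clear E. revert l Hl.
    induction H; intros l2 E; destruct l2; simpl in E; try discriminate; auto.
    inversion E. f_equal; auto.
Qed.

Fixpoint size (t : term F) : nat :=
  match t with
  | Var _ => 1
  | Fn _ ts => S ((fix sl (l : list (term F)) : nat :=
                    match l with [] => 0 | u :: r => size u + sl r end) ts)
  end.

Definition sizes (l : list (term F)) := fold_right (fun u n => size u + n) 0 l.

Lemma size_Fn f ts : size (Fn f ts) = S (sizes ts).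
Proof. reflexivity. Qed.

Lemma size_pos t : 1 <= size t.
Proof. destruct t; simpl; lia. Qed.

Lemma sizes_In u ts : In u ts -> size u <= sizes ts.
Proof. induction ts; simpl; [intros []|intros [->|H]; [lia| specialize (IHts H); lia]]. Qed.

Lemma size_subst_var (s : nat -> term F) t x :
  In x (vars t) -> size (s x) <= size (subst s t).
Proof.
  induction t using term_ind'.
  - simpl. intros [->|[]]; auto.
  - rewrite vars_Fn. intros Hx. apply in_flat_map in Hx as [u [Hu Hx]].
    rewrite Forall_forall in H. specialize (H u Hu Hx).
    rewrite subst_Fn, size_Fn.
    assert (size (subst s u) <= sizes (map (subst s) ts)).
    { apply sizes_In, in_map; auto. } lia.
Qed.

Lemma occurs_check (s : nat -> term F) x f ts :
  In x (vars (Fn f ts)) -> s x <> subst s (Fn f ts).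
Proof.
  intros Hx E. rewrite vars_Fn in Hx. apply in_flat_map in Hx as [u [Hu Hx]].
  pose proof (size_subst_var s u x Hx).
  assert (size (subst s u) <= sizes (map (subst s) ts)) by (apply sizes_In, in_map; auto).
  assert (size (s x) = size (subst s (Fn f ts))) by (rewrite E; auto).
  rewrite subst_Fn, size_Fn in H1. lia.
Qed.

End Terms.

Section Unif.
Variable F : Type.
Notation eqs := (list (term F * term F)).

Definition unifies (s : nat -> term F) (E : eqs) : Prop :=
  Forall (fun e => subst s (fst e) = subst s (snd e)) E.
Definition MGU (s : nat -> term F) (E : eqs) : Prop :=
  unifies s E /\ forall th, unifies th E -> forall x, th x = subst th (s x).
Definition evars (E : eqs) : list nat := flat_map (fun e => vars (fst e) ++ vars (snd e)) E.
Definition nv (E : eqs) : nat := length (nodup Nat.eq_dec (evars E)).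
Definition esize (E : eqs) : nat := fold_right (fun e n => size (fst e) + size (snd e) + n) 0 E.

Lemma nodup_len_le (l1 l2 : list nat) : incl l1 l2 -> length (nodup Nat.eq_dec l1) <= length (nodup Nat.eq_dec l2).
Proof.
  intros H. apply NoDup_incl_length; [apply NoDup_nodup|].
  intros a Ha. apply nodup_In in Ha. apply nodup_In. auto.
Qed.

Lemma nodup_len_lt (l1 l2 : list nat) x : incl l1 l2 -> In x l2 -> ~ In x l1 ->
  length (nodup Nat.eq_dec l1) < length (nodup Nat.eq_dec l2).
Proof.
  intros H Hx Hn. change (length (x :: nodup Nat.eq_dec l1) <= length (nodup Nat.eq_dec l2)).
  apply NoDup_incl_length.
  - constructor; [rewrite nodup_In; auto| apply NoDup_nodup].
  - intros a [<-|Ha]; apply nodup_In; auto. apply nodup_In in Ha; auto.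
Qed.

Definition elim_sub (x : nat) (v : term F) : nat -> term F :=
  fun y => if Nat.eq_dec y x then v else Var y.
Definition substE (s : nat -> term F) (E : eqs) : eqs :=
  map (fun e => (subst s (fst e), subst s (snd e))) E.

Lemma unifies_cons s e E : unifies s (e :: E) <-> subst s (fst e) = subst s (snd e) /\ unifies s E.
Proof. unfold unifies. split; intros H; [inversion H; auto| destruct H; constructor; auto]. Qed.

Lemma unifies_app s E1 E2 : unifies s (E1 ++ E2) <-> unifies s E1 /\ unifies s E2.
Proof. unfold unifies. apply Forall_app. Qed.

Lemma unifies_substE th s E :
  unifies th (substE s E) <-> unifies (fun y => subst th (s y)) E.
Proof.
  unfold unifies, substE. rewrite Forall_map. split; apply Forall_impl; intros [a b]; simpl;
  rewrite !subst_comp; auto.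
Qed.

Lemma elim_inv th x v : th x = subst th v -> forall y, subst th (elim_sub x v y) = th y.
Proof. intros H y. unfold elim_sub. destruct (Nat.eq_dec y x); subst; simpl; auto. Qed.

Lemma subst_ext_all (s1 s2 : nat -> term F) t : (forall x, s1 x = s2 x) -> subst s1 t = subst s2 t.
Proof. intros H; apply subst_ext; auto. Qed.

Lemma unifies_ext s1 s2 E : (forall x, s1 x = s2 x) -> unifies s1 E -> unifies s2 E.
Proof.
  intros H. unfold unifies. apply Forall_impl. intros e. rewrite !(subst_ext_all s1 s2); auto.
Qed.

Lemma elim_MGU x v E s :
  ~ In x (vars v) -> MGU s (substE (elim_sub x v) E) ->
  MGU (fun y => subst s (elim_sub x v y)) ((Var x, v) :: E).
Proof.
  intros Hx [U M]. split.
  - apply unifies_cons. split.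
    + simpl. unfold elim_sub at 1. destruct (Nat.eq_dec x x) as [_|]; [|congruence].
      rewrite <- subst_comp. f_equal. rewrite <- (subst_id v) at 1.
      apply subst_ext. intros y Hy. unfold elim_sub. destruct (Nat.eq_dec y x); subst; tauto.
    + apply unifies_substE in U; auto.
  - intros th Hth y. apply unifies_cons in Hth as [H1 H2]. simpl in H1.
    assert (Hu : unifies th (substE (elim_sub x v) E)).
    { apply unifies_substE. apply unifies_ext with th; auto. intros z; symmetry; apply elim_inv; auto. }
    rewrite subst_comp. rewrite (subst_ext_all (fun z => subst th (s z)) th).
    + symmetry; apply elim_inv; auto.
    + intros z; symmetry; apply M; auto.
Qed.

Lemma evars_cons e E : evars (e :: E) = vars (fst e) ++ vars (snd e) ++ evars E.
Proof. unfold evars; simpl. rewrite app_assoc. auto. Qed.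

Lemma evars_substE x v E y :
  ~ In x (vars v) -> In y (evars (substE (elim_sub x v) E)) ->
  y <> x /\ In y (evars ((Var x, v) :: E)).
Proof.
  intros Hx Hy. unfold evars, substE in Hy. rewrite flat_map_concat_map, map_map, <- flat_map_concat_map in Hy.
  apply in_flat_map in Hy as [[a b] [Hab Hy]]. simpl in Hy.
  assert (K : forall w, In y (vars (subst (elim_sub x v) w)) -> y <> x /\ (In y (vars w) \/ In y (vars v))).
  { intros w Hw. apply vars_subst in Hw as [z [Hz Hyz]]. unfold elim_sub in Hyz.
    destruct (Nat.eq_dec z x).
    - split; [intros ->; auto| auto].
    - simpl in Hyz. destruct Hyz as [<-|[]]. auto. }
  assert (InE : forall w, (w = a \/ w = b) -> In y (vars w) -> In y (evars E)).
  { intros w Hw Hyw. unfold evars. apply in_flat_map. exists (a,b). split; auto. simpl.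
    apply in_app_iff. destruct Hw; subst; auto. }
  rewrite evars_cons. simpl (fst _). simpl (snd _).
  apply in_app_iff in Hy as [Hy|Hy]; apply K in Hy as [Hne [Hy|Hy]]; split; auto;
    rewrite !in_app_iff; right; [right|left|right|left]; eauto.
Qed.

Lemma esize_app E1 E2 : esize (E1 ++ E2) = esize E1 + esize E2.
Proof. induction E1; simpl; auto. rewrite IHE1; lia. Qed.

Lemma combine_props (us vs : list (term F)) :
  length us = length vs ->
  esize (combine us vs) = sizes us + sizes vs /\
  incl (evars (combine us vs)) (flat_map vars us ++ flat_map vars vs) /\
  (forall s, unifies s (combine us vs) <-> map (subst s) us = map (subst s) vs).
Proof.
  revert vs; induction us; intros [|v vs] Hl; simpl in Hl; try discriminate.
  - simpl. split; auto. split. intros a []. intros s; split; auto; constructor.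
  - injection Hl as Hl. destruct (IHus vs Hl) as [H1 [H2 H3]]. simpl. split; [|split].
    + unfold sizes in *; simpl. rewrite H1. lia.
    + intros y Hy. rewrite !in_app_iff in *.
      destruct Hy as [[Hy|Hy]|Hy]; auto. apply H2 in Hy. rewrite in_app_iff in Hy. tauto.
    + intros s. rewrite unifies_cons, H3. simpl. split.
      * intros [-> ->]; auto.
      * intros E; injection E; auto.
Qed.

Theorem unify_mgu_aux : forall n m (E : eqs), nv E = n -> esize E = m ->
  (exists th, unifies th E) -> exists s, MGU s E.
Proof.
  intros n. induction n as [n IHn] using lt_wf_ind. intros m.
  induction m as [m IHm] using lt_wf_ind. intros E Hn Hm [th Hth].
  assert (REC : forall E2, (nv E2 < n \/ (nv E2 <= n /\ esize E2 < m)) ->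
            (exists th, unifies th E2) -> exists s, MGU s E2).
  { intros E2 [H|[H1 H2]] HU.
    - eapply IHn; eauto.
    - destruct (Nat.eq_dec (nv E2) n).
      + eapply IHm; eauto.
      + eapply IHn; eauto. lia. }
  assert (VC : forall x w E2, nv ((Var x, w) :: E2) <= n -> w <> Var x ->
            unifies th ((Var x, w) :: E2) -> exists s, MGU s ((Var x, w) :: E2)).
  { intros x w E2 Hle Hw Hu.
    destruct (in_dec Nat.eq_dec x (vars w)) as [Hin|Hnin].
    - exfalso. apply unifies_cons in Hu as [Hu _]. simpl in Hu. destruct w as [y|g ws].
      + simpl in Hin. destruct Hin as [->|[]]; auto.
      + eapply occurs_check; eauto.
    - destruct (REC (substE (elim_sub x w) E2)) as [s Hs].
      + left. eapply Nat.lt_le_trans; [|exact Hle]. unfold nv.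
        apply nodup_len_lt with x.
        * intros y Hy. apply evars_substE in Hy; tauto.
        * rewrite evars_cons; simpl; auto.
        * intros Hy. apply evars_substE in Hy; tauto.
      + exists th. apply unifies_cons in Hu as [H1 H2]. apply unifies_substE.
        apply unifies_ext with th; auto. intros z; symmetry; apply elim_inv; auto.
      + eexists; apply elim_MGU; eauto. }
  destruct E as [|[u v] E'].
  - exists (@Var F). split; [constructor| intros; reflexivity].
  - assert (Hle : forall E2, incl (evars E2) (evars ((u, v) :: E')) -> nv E2 <= n).
    { intros E2 H. subst n. apply nodup_len_le; auto. }
    destruct u as [x|f us], v as [y|g vs].
    + destruct (Nat.eq_dec x y).
      * subst y. destruct (REC E') as [s [U M]].
        -- right. split.
           ++ apply Hle. rewrite evars_cons. intros a Ha; apply in_app_iff; right; apply in_app_iff; auto.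
           ++ subst m. simpl. lia.
        -- exists th. apply unifies_cons in Hth; tauto.
        -- exists s. split.
           ++ apply unifies_cons; auto.
           ++ intros th' Hth'. apply M. apply unifies_cons in Hth'; tauto.
      * apply VC; auto. subst; auto. congruence.
    + apply VC; auto. subst; auto. discriminate.
    + destruct (VC y (Fn f us) E') as [s [U M]].
      * apply Hle. rewrite !evars_cons. cbn [fst snd]. intros a Ha. rewrite !in_app_iff in *. tauto.
      * discriminate.
      * apply unifies_cons in Hth as [H1 H2]. apply unifies_cons; auto.
      * exists s. split.
        -- apply unifies_cons in U as [U1 U2]. apply unifies_cons; auto.
        -- intros th' Hth'. apply M. apply unifies_cons in Hth' as [H1 H2]. apply unifies_cons; auto.
    + apply unifies_cons in Hth as [H1 H2]. simpl in H1. injection H1 as Hfg Hmap. subst g.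
      assert (Hl : length us = length vs).
      { rewrite <- (length_map (subst th) us), Hmap, length_map; auto. }
      destruct (combine_props us vs Hl) as [C1 [C2 C3]].
      destruct (REC (combine us vs ++ E')) as [s [U M]].
      * right. split.
        -- apply Hle. unfold evars at 1. rewrite flat_map_app. fold (evars (combine us vs)). fold (evars E').
           rewrite evars_cons. cbn [fst snd]. rewrite !vars_Fn. intros a Ha. rewrite !in_app_iff in *.
           destruct Ha as [Ha|Ha]; [apply C2 in Ha; rewrite in_app_iff in Ha|]; tauto.
        -- subst m. rewrite esize_app, C1. change (esize ((Fn f us, Fn f vs) :: E')) with (size (Fn f us) + size (Fn f vs) + esize E'). rewrite !size_Fn. lia.
      * exists th. apply unifies_app. split; auto. apply C3; auto.
      * exists s. apply unifies_app in U as [U1 U2]. split.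
        -- apply unifies_cons. split; auto. simpl. f_equal. apply C3; auto.
        -- intros th' Hth'. apply M. apply unifies_cons in Hth' as [H1' H2'].
           simpl in H1'. injection H1' as H1'. apply unifies_app; split; auto. apply C3; auto.
Qed.

Theorem unify_mgu (E : eqs) th : unifies th E -> exists s, MGU s E.
Proof. intros H. eapply unify_mgu_aux; eauto. Qed.

Lemma atom_mgu {P} (A B : atom F P) th :
  subst_atom th A = subst_atom th B ->
  exists s, is_mgu s A B /\ forall x, th x = subst th (s x).
Proof.
  intros H. destruct A as [p a|a1 a2], B as [q b|b1 b2]; simpl in H; try discriminate.
  - injection H as -> H.
    destruct (@unify_mgu [(a, b)] th) as [s [U M]].
    { constructor; auto. }
    exists s. split; [split|].
    + simpl. apply unifies_cons in U as [U _]. simpl in U. rewrite U; auto.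
    + intros th' Hth'. simpl in Hth'. injection Hth' as Hth'. exists th'. apply M.
      constructor; auto.
    + apply M. constructor; auto.
  - injection H as H1 H2.
    destruct (@unify_mgu [(a1, b1); (a2, b2)] th) as [s [U M]].
    { repeat constructor; auto. }
    exists s. split; [split|].
    + simpl. inversion U as [|? ? U1 U2]; inversion U2; subst; simpl in *. congruence.
    + intros th' Hth'. simpl in Hth'. injection Hth' as Hth1 Hth2. exists th'. apply M.
      repeat constructor; auto.
    + apply M. repeat constructor; auto.
Qed.

End Unif.

Section DM.
Variable A : Type.
Variable R : A -> A -> Prop.

Definition mult1 (N M : list A) : Prop :=
  exists M0 a K, Permutation M (a :: M0) /\ Permutation N (K ++ M0) /\ forall k, In k K -> R k a.

Lemma Acc_perm M M' : Acc mult1 M -> Permutation M M' -> Acc mult1 M'.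
Proof.
  intros H P. constructor. intros N [M0 [a [K [H1 [H2 H3]]]]].
  apply (Acc_inv H). exists M0, a, K. split; auto. eapply perm_trans; eauto.
Qed.

Lemma perm_in_split (a : A) l : In a l -> exists l', Permutation l (a :: l').
Proof.
  intros H. apply in_split in H as [l1 [l2 ->]]. exists (l1 ++ l2).
  apply Permutation_sym, Permutation_middle.
Qed.

Lemma less_add N a M0 : mult1 N (a :: M0) ->
  (exists M, mult1 M M0 /\ Permutation N (a :: M)) \/
  (exists K, (forall b, In b K -> R b a) /\ Permutation N (K ++ M0)).
Proof.
  intros [M1 [b [K [H1 [H2 H3]]]]].
  destruct (classic (a = b)) as [<-|Hne].
  - right. exists K. split; auto. eapply perm_trans; [exact H2|].
    apply Permutation_app_head. apply Permutation_cons_inv with a. apply Permutation_sym; auto.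
  - left. assert (Ha : In a M1).
    { assert (In a (b :: M1)) by (eapply Permutation_in; eauto; simpl; auto).
      destruct H; auto. congruence. }
    apply perm_in_split in Ha as [M2 HM2].
    assert (HM0 : Permutation M0 (b :: M2)).
    { apply Permutation_cons_inv with a. eapply perm_trans; [exact H1|].
      eapply perm_trans; [apply perm_skip; exact HM2|]. apply perm_swap. }
    exists (K ++ M2). split.
    + exists M2, b, K. split; auto.
    + eapply perm_trans; [exact H2|]. eapply perm_trans; [apply Permutation_app_head; exact HM2|].
      apply Permutation_sym, Permutation_middle.
Qed.

Lemma acc_add1 a : (forall b, R b a -> forall M, Acc mult1 M -> Acc mult1 (b :: M)) ->
  forall M0, Acc mult1 M0 -> Acc mult1 (a :: M0).
Proof.
  intros H M0 HM0. induction HM0 as [M0 HM0 IH].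
  constructor. intros N HN. apply less_add in HN as [[M [H1 H2]]|[K [H1 H2]]].
  - apply Acc_perm with (a :: M); [apply IH; auto| apply Permutation_sym; auto].
  - apply Acc_perm with (K ++ M0); [|apply Permutation_sym; auto].
    clear H2. induction K; simpl; [constructor; auto|].
    apply H; [apply H1; simpl; auto|]. apply IHK. intros; apply H1; simpl; auto.
Qed.

Lemma acc_add a : Acc R a -> forall M, Acc mult1 M -> Acc mult1 (a :: M).
Proof.
  intros Ha. induction Ha as [a Ha IH]. intros M HM. apply acc_add1; auto.
Qed.

Lemma wf_mult1 : well_founded R -> well_founded mult1.
Proof.
  intros W M. induction M.
  - constructor. intros N [M0 [a [K [H1 _]]]]. apply Permutation_nil in H1. discriminate.
  - apply acc_add; auto.
Qed.

Lemma partition_dom (x : A) X' Y : (forall y, In y Y -> exists x0, In x0 (x :: X') /\ R y x0) ->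
  exists Y1 Y2, Permutation Y (Y1 ++ Y2) /\ (forall y, In y Y1 -> R y x) /\
    (forall y, In y Y2 -> exists x0, In x0 X' /\ R y x0).
Proof.
  induction Y as [|y Y IH]; intros H.
  - exists [], []. simpl; split; auto. split; intros _ [].
  - destruct IH as [Y1 [Y2 [P [H1 H2]]]]; [intros; apply H; simpl; auto|].
    destruct (classic (R y x)).
    + exists (y :: Y1), Y2. split; [simpl; apply perm_skip; auto|]. split; auto.
      intros z [<-|Hz]; auto.
    + exists Y1, (y :: Y2). split; [eapply perm_trans; [apply perm_skip; exact P|]; apply Permutation_middle|].
      split; auto. intros z [<-|Hz]; auto.
      destruct (H y) as [x0 [[<-|Hx0] Hr]]; simpl; auto. contradiction. eauto.
Qed.

Lemma mul_lt_tc N M : mul_lt R N M -> clos_trans _ mult1 N M.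
Proof.
  intros [Z [X [Y [HM [HN [HX HY]]]]]]. revert Z Y N M HM HN HY.
  induction X as [|x X' IH]; [congruence|]. intros Z Y N M HM HN HY.
  destruct (partition_dom Y HY) as [Y1 [Y2 [P [H1 H2]]]].
  destruct X' as [|x' X''].
  - apply t_step. exists Z, x, Y1. split; [eapply perm_trans; [exact HM|]; apply Permutation_sym, Permutation_cons_append|].
    split; auto. destruct Y2 as [|y2 Y2]; [|destruct (H2 y2) as [? [[] _]]; simpl; auto].
    rewrite app_nil_r in P. eapply perm_trans; [exact HN|].
    eapply perm_trans; [apply Permutation_app_head; exact P|]. apply Permutation_app_comm.
  - apply t_trans with (Z ++ Y1 ++ x' :: X'').
    + apply IH with (Z ++ Y1) Y2; auto; try congruence.
      * rewrite app_assoc; auto.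
      * eapply perm_trans; [exact HN|]. rewrite <- app_assoc. apply Permutation_app_head; auto.
    + apply t_step. exists (Z ++ x' :: X''), x, Y1. split.
      * eapply perm_trans; [exact HM|]. apply Permutation_sym, Permutation_middle.
      * split; auto. rewrite app_assoc. eapply perm_trans; [apply Permutation_app_tail, Permutation_app_comm|].
        rewrite <- app_assoc. auto.
Qed.

Theorem wf_mul_lt : well_founded R -> well_founded (mul_lt R).
Proof.
  intros W. apply wf_incl with (clos_trans _ mult1).
  - intros N M H. apply mul_lt_tc; auto.
  - apply wf_clos_trans, wf_mult1; auto.
Qed.

Lemma mul_lt_perm N N' M M' : Permutation N N' -> Permutation M M' -> mul_lt R N M -> mul_lt R N' M'.
Proof.
  intros PN PM [Z [X [Y [H1 [H2 H3]]]]]. exists Z, X, Y. split; [|split]; auto.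
  - apply perm_trans with M; auto. apply Permutation_sym; auto.
  - apply perm_trans with N; auto. apply Permutation_sym; auto.
Qed.

Lemma mul_lt_one N b : mul_lt R N [b] <-> forall y, In y N -> R y b.
Proof.
  split.
  - intros [Z [X [Y [H1 [H2 [H3 H4]]]]]].
    assert (HZ : Z = []).
    { apply Permutation_length in H1. rewrite length_app in H1. simpl in H1.
      destruct X; [congruence|]. destruct Z; simpl in H1; auto. lia. }
    subst Z. simpl in *. apply Permutation_length_1_inv in H1. subst X.
    intros y Hy. destruct (H4 y) as [x [[<-|[]] Hr]]; auto.
    eapply Permutation_in; eauto.
  - intros H. exists [], [b], N. simpl. split; auto. split; auto. split; [congruence|].
    intros y Hy; exists b; auto.
Qed.

Lemma mul_lt_two N b : mul_lt R N [b; b] ->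
  (forall y, In y N -> R y b) \/ exists Y, Permutation N (b :: Y) /\ forall y, In y Y -> R y b.
Proof.
  intros [Z [X [Y [H1 [H2 [H3 H4]]]]]].
  assert (Hb : forall z, In z (Z ++ X) -> z = b).
  { intros z Hz. apply Permutation_sym in H1. eapply Permutation_in in Hz; eauto.
    destruct Hz as [<-|[<-|[]]]; auto. }
  assert (Hdom : forall y, In y Y -> R y b).
  { intros y Hy. destruct (H4 y Hy) as [x [Hx Hr]]. rewrite (Hb x) in Hr; auto.
    apply in_or_app; auto. }
  destruct Z as [|z Z].
  - left. intros y Hy. apply Hdom. eapply Permutation_in; eauto.
  - right. exists (Z ++ Y). rewrite (Hb z) in H2; simpl; auto. split; auto.
    intros y Hy. apply in_app_iff in Hy as [Hy|Hy]; auto.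
    exfalso. apply Permutation_length in H1. simpl in H1. rewrite length_app in H1.
    destruct X; [congruence|]. destruct Z; [destruct Hy|]. simpl in H1. lia.
Qed.

End DM.

Section Lits.
Variables F P : Type.
Variable lt : atom F P -> atom F P -> Prop.
Hypothesis lt_irrefl : forall A, ~ lt A A.
Hypothesis lt_trans : forall A B C, lt A B -> lt B C -> lt A C.

Definition lkey_lt (L1 L2 : lit F P) : Prop :=
  match L1, L2 with
  | Pos a, Pos b => lt a b
  | Neg a, Pos b => lt a b
  | Pos a, Neg b => lt a b \/ a = b
  | Neg a, Neg b => lt a b
  end.

Lemma lit_lt_char L1 L2 : lit_lt lt L1 L2 <-> lkey_lt L1 L2.
Proof.
  unfold lit_lt. destruct L1 as [a|a], L2 as [b|b]; simpl.
  - rewrite mul_lt_one. split; [intros H; apply H; simpl; auto| intros H y [<-|[]]; auto].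
  - split.
    + intros H. apply mul_lt_two in H as [H|[Y [H1 H2]]].
      * left; apply H; simpl; auto.
      * right. apply Permutation_length_1_inv in H1. congruence.
    + intros [H|<-].
      * exists [], [b; b], [a]. simpl. repeat split; auto; try congruence.
        intros y [<-|[]]; exists b; auto.
      * exists [a], [a], []. simpl. repeat split; auto; try congruence. intros y [].
  - rewrite mul_lt_one. split; [intros H; apply H; simpl; auto| intros H y [<-|[<-|[]]]; auto].
  - split.
    + intros H. apply mul_lt_two in H as [H|[Y [H1 H2]]].
      * apply H; simpl; auto.
      * assert (a = b) by (assert (In b [a; a]) by (apply Permutation_sym in H1; eapply Permutation_in; eauto; simpl; auto);
                           destruct H as [->|[->|[]]]; auto).
        subst b. apply H2. apply Permutation_cons_inv in H1. eapply Permutation_in; eauto. simpl; auto.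
    + intros H. exists [], [b; b], [a; a]. simpl. repeat split; auto; try congruence.
      intros y [<-|[<-|[]]]; exists b; auto.
Qed.

Lemma lit_lt_irrefl L : ~ lit_lt lt L L.
Proof. rewrite lit_lt_char. destruct L; simpl; auto. Qed.

Lemma lit_lt_trans L1 L2 L3 : lit_lt lt L1 L2 -> lit_lt lt L2 L3 -> lit_lt lt L1 L3.
Proof.
  rewrite !lit_lt_char. destruct L1, L2, L3; simpl; intros; 
  repeat match goal with H : _ \/ _ |- _ => destruct H end; subst; eauto.
Qed.

Lemma lit_le_lt_trans L1 L2 L3 : lit_le lt L1 L2 -> lit_lt lt L2 L3 -> lit_lt lt L1 L3.
Proof. intros [->|H] H2; auto. eapply lit_lt_trans; eauto. Qed.

Lemma lit_lt_pos_neg a : lit_lt lt (Pos a) (Neg a).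
Proof. rewrite lit_lt_char; simpl; auto. Qed.

Definition lit_atom (L : lit F P) := match L with Pos a => a | Neg a => a end.

Lemma lit_lt_total L1 L2 : (lit_atom L1 <> lit_atom L2 -> lt (lit_atom L1) (lit_atom L2) \/ lt (lit_atom L2) (lit_atom L1)) ->
  L1 = L2 \/ lit_lt lt L1 L2 \/ lit_lt lt L2 L1.
Proof.
  intros H. rewrite !lit_lt_char. destruct L1 as [a|a], L2 as [b|b]; simpl in *;
  destruct (classic (a = b)) as [<-|Hne]; auto; destruct (H Hne); auto.
Qed.

Lemma wf_lit_lt : well_founded lt -> well_founded (lit_lt lt).
Proof.
  intros W. unfold lit_lt. apply wf_inverse_image with (f := @lit_ms F P). apply wf_mul_lt; auto.
Qed.

End Lits.

Section Norm.
Variable F : Type.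
Variable ar : F -> nat.

Definition psum (l : sdc F) : nat := fold_right (fun c n => size (fst c) + size (snd c) + n) 0 l.
Definition msize (o : option (sdc F)) : nat := match o with None => 0 | Some l => S (psum l) end.

Lemma psum_perm l l' : Permutation l l' -> psum l = psum l'.
Proof. induction 1; simpl; lia. Qed.

Lemma psum_cons c l : psum (c :: l) = size (fst c) + size (snd c) + psum l.
Proof. reflexivity. Qed.

Lemma step_dec o o' : norm_step o o' -> msize o' < msize o.
Proof.
  destruct 1; simpl; try lia.
  - apply psum_perm in H. rewrite H. rewrite !psum_cons. cbn [fst snd].
    assert (size (nth i ts d) <= sizes ts) by (apply sizes_In, nth_In; auto).
    assert (size (nth i ss d) <= sizes ss) by (apply sizes_In, nth_In; auto).
    rewrite !size_Fn. lia.
  - apply psum_perm in H. rewrite H. rewrite !psum_cons. cbn [fst snd]. pose proof (size_pos (Fn f ts)). lia.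
  - apply psum_perm in H. rewrite H. rewrite !psum_cons. cbn [fst snd]. pose proof (size_pos (Var x : term F)). lia.
Qed.

Lemma norm_exists (o : option (sdc F)) : exists o', is_norm o o'.
Proof.
  induction o as [o IH] using (well_founded_induction (well_founded_ltof _ msize)).
  destruct (classic (exists o'', norm_step o o'')) as [[o'' Hs]|Hn].
  - destruct (IH o'') as [o' [H1 H2]]. { apply step_dec; auto. }
    exists o'. split; auto. eapply rt_trans; [apply rt_step; eauto| auto].
  - exists o. split; auto. apply rt_refl.
Qed.

Definition Inv (dl : nat -> term F) (pi : sdc F) : Prop :=
  forall c, In c pi -> wf ar (subst dl (fst c)) /\ wf ar (snd c) /\ straight (snd c).
Definition Sol (dl : nat -> term F) (pi : sdc F) : Prop :=
  forall c, In c pi -> ~ instance_of (subst dl (fst c)) (snd c).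

Lemma straight_linear f (ts : list (term F)) : straight (Fn f ts) -> linear (Fn f ts).
Proof. inversion 1; auto. Qed.

Lemma vars_map_Var (xs : list nat) : flat_map vars (map (@Var F) xs) = xs.
Proof. induction xs; simpl; auto. f_equal; auto. Qed.

Lemma is_var_list (ys : list (term F)) : Forall is_var ys -> exists xs, ys = map Var xs.
Proof.
  induction 1; [exists []; auto|]. destruct IHForall as [xs ->]. destruct H as [z ->].
  exists (z :: xs); auto.
Qed.

Lemma match_vars (xs : list nat) (us : list (term F)) : NoDup xs -> length xs = length us ->
  exists tau : nat -> term F, map tau xs = us.
Proof.
  revert us. induction xs as [|x xs IH]; intros [|u us] Hn Hl; simpl in Hl; try discriminate.
  - exists (@Var F); auto.
  - inversion Hn; subst. destruct (IH us) as [tau Ht]; auto.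
    exists (fun y => if Nat.eq_dec y x then u else tau y). simpl.
    destruct (Nat.eq_dec x x); [|congruence]. f_equal. rewrite <- Ht. apply map_ext_in.
    intros y Hy. destruct (Nat.eq_dec y x); subst; tauto.
Qed.

Lemma NoDup_app_disj (a b : list nat) x : NoDup (a ++ b) -> In x a -> In x b -> False.
Proof.
  induction a; simpl; [intros _ []|]. intros H [->|Ha] Hb; inversion H; subst; eauto.
  apply H2. apply in_or_app; auto.
Qed.

Lemma subst_map_Var (tau : nat -> term F) xs : map (subst tau) (map Var xs) = map tau xs.
Proof. rewrite map_map. reflexivity. Qed.

Lemma step_sound dl pi o : grounding ar dl -> norm_step (Some pi) o -> Inv dl pi -> Sol dl pi ->
  exists pi2, o = Some pi2 /\ Inv dl pi2 /\ Sol dl pi2.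
Proof.
  intros G Hs HI HS. inversion Hs; subst.
  - exfalso. apply (HS (Fn f ts, Var y)); [eapply Permutation_in; [apply Permutation_sym; eauto| simpl; auto]|].
    exists (fun _ => subst dl (Fn f ts)). reflexivity.
  - exfalso. assert (Hin : In (Fn f ts, Fn f ys) pi) by (eapply Permutation_in; [apply Permutation_sym; eauto| simpl; auto]).
    destruct (HI _ Hin) as [W1 [W2 S2]]. cbn [fst snd] in W1, W2, S2.
    apply (HS _ Hin). simpl.
    apply is_var_list in H1 as [xs ->].
    apply straight_linear in S2. unfold linear in S2. rewrite vars_Fn, vars_map_Var in S2.
    rewrite subst_Fn in W1. apply wf_Fn in W1 as [L1 _]. apply wf_Fn in W2 as [L2 _].
    rewrite length_map in L1, L2.
    destruct (@match_vars xs (map (subst dl) ts)) as [tau Ht]; auto. rewrite length_map; congruence.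
    exists tau. rewrite !subst_Fn, subst_map_Var, Ht. reflexivity.
  - assert (Hin : In (Fn f ts, Fn f ss) pi) by (eapply Permutation_in; [apply Permutation_sym; eauto| simpl; auto]).
    assert (Hr : forall c, In c r -> In c pi) by (intros c Hc; eapply Permutation_in; [apply Permutation_sym; eauto| simpl; auto]).
    destruct (HI _ Hin) as [W1 [W2 S2]]. cbn [fst snd] in W1, W2, S2.
    rewrite subst_Fn in W1. apply wf_Fn in W1 as [L1 W1]. apply wf_Fn in W2 as [L2 W2'].
    rewrite length_map in L1.
    inversion S2 as [|f' ss' Hlin Hv|f' l1 s l2 Hlin Hv1 Hv2 Ss]; subst.
    + exfalso. rewrite Forall_forall in Hv. apply H3. apply Hv. apply nth_In; auto.
    + assert (Hi : i = length l1).
      { destruct (Nat.lt_trichotomy i (length l1)) as [Hlt|[Heq|Hgt]]; auto; exfalso; apply H3.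
        - rewrite app_nth1 by auto. rewrite Forall_forall in Hv1. apply Hv1, nth_In; auto.
        - rewrite app_nth2 by lia. destruct (i - length l1) eqn:E; [lia|]. simpl.
          rewrite Forall_forall in Hv2. apply Hv2, nth_In. rewrite length_app in H2. simpl in H2. lia. }
      subst i. rewrite nth_middle in *.
      exists ((nth (length l1) ts d, s) :: r). split; auto. split.
      * intros c [<-|Hc]; [|apply HI, Hr; auto]. simpl. split; [|split]; auto.
        -- rewrite Forall_forall in W1. apply W1. apply in_map, nth_In; auto.
        -- rewrite Forall_forall in W2'. apply W2'. apply in_or_app; simpl; auto.
      * intros c [<-|Hc]; [|apply HS, Hr; auto]. simpl. intros [tau Ht].
        apply (HS _ Hin). simpl.
        destruct (nth_split ts d H1) as [ts1 [ts2 [Ets Hl1]]].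
        apply is_var_list in Hv1 as [xs1 ->]. apply is_var_list in Hv2 as [xs2 ->].
        rewrite length_map in *.
        unfold linear in Hlin. rewrite vars_Fn, flat_map_app in Hlin. simpl in Hlin.
        rewrite !vars_map_Var in Hlin.
        assert (Lts : length ts = length xs1 + S (length xs2)).
        { rewrite L1, <- L2, length_app. simpl. rewrite !length_map. lia. }
        rewrite Ets, length_app in Lts. simpl in Lts.
        destruct (@match_vars xs1 (map (subst dl) ts1)) as [tau1 Ht1].
        { eapply NoDup_app_remove_r; eauto. } { rewrite length_map. lia. }
        destruct (@match_vars xs2 (map (subst dl) ts2)) as [tau2 Ht2].
        { apply NoDup_app_remove_l in Hlin. eapply NoDup_app_remove_l; eauto. } { rewrite length_map. lia. }
        exists (fun x => if in_dec Nat.eq_dec x xs1 then tau1 x else if in_dec Nat.eq_dec x xs2 then tau2 x else tau x).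
        rewrite Ets at 1. rewrite !subst_Fn, !map_app. cbn [map]. rewrite !subst_map_Var.
        rewrite <- Ht1, <- Ht2. f_equal. f_equal.
        -- apply map_ext_in. intros x Hx. destruct (in_dec Nat.eq_dec x xs1); tauto.
        -- f_equal.
           ++ rewrite Ht. apply subst_ext. intros x Hx.
              destruct (in_dec Nat.eq_dec x xs1) as [Hx1|]; [exfalso; apply (NoDup_app_disj xs1 (vars s ++ xs2) x Hlin Hx1); apply in_or_app; auto|].
              destruct (in_dec Nat.eq_dec x xs2) as [Hx2|]; auto.
              exfalso. apply NoDup_app_remove_l in Hlin. apply (NoDup_app_disj (vars s) xs2 x Hlin Hx Hx2).
           ++ apply map_ext_in. intros x Hx.
              destruct (in_dec Nat.eq_dec x xs1) as [Hx1|]; [exfalso; apply (NoDup_app_disj xs1 (vars s ++ xs2) x Hlin Hx1); apply in_or_app; right; auto|].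
              destruct (in_dec Nat.eq_dec x xs2); tauto.
  - exists r. split; auto. split; intros c Hc; [apply HI|apply HS]; eapply Permutation_in;
      [apply Permutation_sym; eauto| simpl; auto| apply Permutation_sym; eauto| simpl; auto].
  - exists ((Var x, s) :: r). split; auto. split; intros c Hc; [apply HI|apply HS]; eapply Permutation_in;
      try (apply Permutation_sym; eauto); destruct Hc; simpl; auto.
Qed.

Lemma crt_sound dl pi o : grounding ar dl -> clos_refl_trans _ norm_step (Some pi) o ->
  Inv dl pi -> Sol dl pi -> exists pi2, o = Some pi2 /\ Inv dl pi2 /\ Sol dl pi2.
Proof.
  intros G H. apply clos_rt_rt1n in H. remember (Some pi) as o0. revert pi Heqo0.
  induction H; intros pi E HI HS; subst.
  - eauto.
  - destruct (step_sound G H HI HS) as [pi2 [-> [H3 H4]]]. eapply IHclos_refl_trans_1n; eauto.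
Qed.

End Norm.

Section Clauses.
Variables F P : Type.
Notation comp s1 s2 := (fun x => subst s2 (s1 x)).

Lemma subst_atom_comp (s1 s2 : nat -> term F) (A : atom F P) :
  subst_atom s2 (subst_atom s1 A) = subst_atom (comp s1 s2) A.
Proof. destruct A; simpl; rewrite !subst_comp; auto. Qed.

Lemma subst_lit_comp (s1 s2 : nat -> term F) (L : lit F P) :
  subst_lit s2 (subst_lit s1 L) = subst_lit (comp s1 s2) L.
Proof. destruct L; simpl; rewrite subst_atom_comp; auto. Qed.

Lemma subst_clause_comp (s1 s2 : nat -> term F) (C : clause F P) :
  subst_clause s2 (subst_clause s1 C) = subst_clause (comp s1 s2) C.
Proof.
  destruct C; unfold subst_clause; simpl; rewrite !map_map; f_equal; apply map_ext; intros; apply subst_atom_comp.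
Qed.

Lemma subst_atom_ext (s1 s2 : nat -> term F) (A : atom F P) :
  (forall x, In x (atom_vars A) -> s1 x = s2 x) -> subst_atom s1 A = subst_atom s2 A.
Proof.
  destruct A; unfold atom_vars; simpl; intros H; f_equal; apply subst_ext; intros; apply H;
  rewrite ?app_nil_r, ?in_app_iff; auto.
Qed.

Lemma subst_lit_ext (s1 s2 : nat -> term F) (L : lit F P) :
  (forall x, In x (atom_vars (lit_atom L)) -> s1 x = s2 x) -> subst_lit s1 L = subst_lit s2 L.
Proof. destruct L; simpl; intros; f_equal; apply subst_atom_ext; auto. Qed.

Lemma subst_atom_mgu (th sg : nat -> term F) (A : atom F P) :
  (forall x, th x = subst th (sg x)) -> subst_atom th (subst_atom sg A) = subst_atom th A.
Proof. intros H. rewrite subst_atom_comp. apply subst_atom_ext. intros; symmetry; auto. Qed.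

Lemma subst_lit_mgu (th sg : nat -> term F) (L : lit F P) :
  (forall x, th x = subst th (sg x)) -> subst_lit th (subst_lit sg L) = subst_lit th L.
Proof. intros H. destruct L; simpl; rewrite subst_atom_mgu; auto. Qed.

Lemma subst_clause_mgu (th sg : nat -> term F) (C : clause F P) :
  (forall x, th x = subst th (sg x)) -> subst_clause th (subst_clause sg C) = subst_clause th C.
Proof.
  intros H. destruct C; unfold subst_clause; simpl; rewrite !map_map; f_equal; apply map_ext; intros;
  apply subst_atom_mgu; auto.
Qed.

Lemma lits_subst (s : nat -> term F) (C : clause F P) :
  lits (subst_clause s C) = map (subst_lit s) (lits C).
Proof.
  destruct C as [G D]; unfold lits, subst_clause; simpl. rewrite map_app, !map_map. reflexivity.
Qed.

Lemma lit_atom_subst (s : nat -> term F) (L : lit F P) : lit_atom (subst_lit s L) = subst_atom s (lit_atom L).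
Proof. destruct L; auto. Qed.

Lemma In_lits (L : lit F P) (C : clause F P) :
  In L (lits C) <-> (exists A, L = Neg A /\ In A (fst C)) \/ (exists A, L = Pos A /\ In A (snd C)).
Proof.
  destruct C as [G D]; unfold lits; simpl. rewrite in_app_iff, !in_map_iff.
  split; intros [[A [H1 H2]]|[A [H1 H2]]]; [left|right|left|right]; exists A; auto.
Qed.

Lemma atom_vars_clause (L : lit F P) (C : clause F P) x :
  In L (lits C) -> In x (atom_vars (lit_atom L)) -> In x (clause_vars C).
Proof.
  intros HL Hx. apply In_lits in HL as [[A [-> HA]]|[A [-> HA]]]; unfold clause_vars;
  apply in_app_iff; [left|right]; apply in_flat_map; eauto.
Qed.

Lemma atom_vars_clause_fst (A : atom F P) (C : clause F P) x :
  In A (fst C) -> In x (atom_vars A) -> In x (clause_vars C).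
Proof. intros H1 H2. apply atom_vars_clause with (L := Neg A); auto. apply In_lits; left; eauto. Qed.

Lemma atom_vars_clause_snd (A : atom F P) (C : clause F P) x :
  In A (snd C) -> In x (atom_vars A) -> In x (clause_vars C).
Proof. intros H1 H2. apply atom_vars_clause with (L := Pos A); auto. apply In_lits; right; eauto. Qed.

Lemma subst_clause_ext (s1 s2 : nat -> term F) (C : clause F P) :
  (forall x, In x (clause_vars C) -> s1 x = s2 x) -> subst_clause s1 C = subst_clause s2 C.
Proof.
  intros H. destruct C as [G D]; unfold subst_clause; simpl. f_equal; apply map_ext_in; intros A HA;
  apply subst_atom_ext; intros x Hx; apply H.
  - apply atom_vars_clause_fst with A; auto.
  - apply atom_vars_clause_snd with A; auto.
Qed.

Lemma ngsat (I : atom F P -> Prop) (D : clause F P) :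
  ~ gsat I D <-> (forall A, In A (snd D) -> ~ I A) /\ (forall A, In A (fst D) -> I A).
Proof.
  unfold gsat. split.
  - intros H. split.
    + intros A HA HI; apply H; left; eauto.
    + intros A HA. apply NNPP. intros HI. apply H. right. eauto.
  - intros [H1 H2] [[A [HA HI]]|[A [HA HI]]]; [eapply H1|]; eauto.
Qed.

Lemma gsat_perm (I : atom F P -> Prop) (D D' : clause F P) : clause_perm D D' -> gsat I D -> gsat I D'.
Proof.
  intros [P1 P2] [[A [HA HI]]|[A [HA HI]]]; [left|right]; exists A; split; auto;
  eapply Permutation_in; eauto.
Qed.

Lemma lits_perm (C D : clause F P) : clause_perm C D -> Permutation (lits C) (lits D).
Proof. intros [P1 P2]. unfold lits. apply Permutation_app; apply Permutation_map; auto. Qed.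

Lemma vars_rename_img (r : nat -> nat) (t : term F) x :
  In x (vars (subst (fun y => Var (r y)) t)) -> exists y, x = r y.
Proof. intros H. apply vars_subst in H as [y [_ [H|[]]]]. eauto. Qed.

Lemma atom_vars_rename_img (r : nat -> nat) (A : atom F P) x :
  In x (atom_vars (subst_atom (fun y => Var (r y)) A)) -> exists y, x = r y.
Proof.
  unfold atom_vars. intros H. apply in_flat_map in H as [t [Ht Hx]].
  destruct A; simpl in Ht; repeat destruct Ht as [<-|Ht]; try destruct Ht; eapply vars_rename_img; eauto.
Qed.

Lemma cclause_vars_rename (r : nat -> nat) (C : cclause F P) x :
  In x (cclause_vars (rename r C)) -> exists y, x = r y.
Proof.
  destruct C as [[G D] pi]. unfold cclause_vars, rename, clause_vars, sdc_lhs_vars, subst_clause, subst_sdc; simpl.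
  rewrite !in_app_iff. intros [[H|H]|H]; apply in_flat_map in H as [a [Ha Hx]];
    apply in_map_iff in Ha as [b [<- Hb]]; simpl in Hx.
  - eapply atom_vars_rename_img; eauto.
  - eapply atom_vars_rename_img; eauto.
  - eapply vars_rename_img; eauto.
Qed.

Lemma atom_vars_rename (r : nat -> nat) (A : atom F P) :
  atom_vars (subst_atom (fun y => Var (r y)) A) = map r (atom_vars A).
Proof.
  unfold atom_vars. destruct A; simpl; rewrite ?app_nil_r, !vars_rename, ?map_app; auto.
Qed.

Lemma sel_rename (r : nat -> nat) (C : clause F P) B' :
  (forall x y, r x = r y -> x = y) ->
  selected (subst_clause (fun y => Var (r y)) C) B' -> exists B, selected C B.
Proof.
  intros Hr. set (rho := fun y => Var (r y) : term F).
  destruct C as [G D]. unfold selected, subst_clause; simpl. intros [HB' Hs].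
  apply in_map_iff in HB' as [B [<- HB]]. exists B. split; auto.
  assert (DV : flat_map atom_vars (map (subst_atom rho) D) = map r (flat_map atom_vars D)).
  { clear -D. induction D; simpl; auto. rewrite map_app, IHD. unfold rho. rewrite atom_vars_rename. auto. }
  unfold sel_cond in *. rewrite DV in Hs.
  destruct Hs as [S [t' [E Hc]]]. destruct B as [S0 t|]; simpl in E; try discriminate.
  injection E as E1 E2. subst S t'. exists S0, t. split; auto.
  destruct Hc as [Hc|[[Hc1 [x [Hx1 Hx2]]]|[Hc1 [A' [HA' Ht']]]]].
  - left. intros [x ->]. apply Hc. exists (r x). reflexivity.
  - right; left. split.
    + intros A HA. destruct (Hc1 (subst_atom rho A)) as [p [x' E]]; [apply in_map; auto|].
      destruct A as [p0 a|]; simpl in E; try discriminate. injection E as -> E.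
      destruct a; simpl in E; try discriminate. exists p, n; auto.
    + destruct t; simpl in Hx1; try discriminate. injection Hx1 as <-. exists n; split; auto.
      intros Hn. apply Hx2. apply in_map; auto.
  - right; right. split.
    + intros A HA. destruct (Hc1 (subst_atom rho A)) as [p [y' [E Hy]]]; [apply in_map; auto|].
      destruct A as [p0 a|]; simpl in E; try discriminate. injection E as -> E.
      destruct a; simpl in E; try discriminate. injection E as <-. exists p, n. split; auto.
      apply in_map_iff in Hy as [z [Hz Hz']]. apply Hr in Hz. subst; auto.
    + apply in_map_iff in HA' as [A [<- HA]]. exists A. split; auto.
      subst rho. destruct A; simpl in Ht'.
      * destruct Ht' as [Ht'|[]]. left. eapply subst_rename_inj; eauto.
      * destruct Ht' as [Ht'|[Ht'|[]]]; [left|right; left]; eapply subst_rename_inj; eauto.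
Qed.

Lemma rename_id (C : cclause F P) : rename (fun x => x) C = C.
Proof.
  destruct C as [[G D] pi]. unfold rename, subst_clause, subst_sdc; simpl.
  assert (HA : forall A : atom F P, subst_atom (fun x => Var x) A = A).
  { destruct A; simpl; rewrite ?subst_id; auto. }
  f_equal; [f_equal|].
  - rewrite <- (map_id G) at 2. apply map_ext; auto.
  - rewrite <- (map_id D) at 2. apply map_ext; auto.
  - rewrite <- (map_id pi) at 2. apply map_ext. intros [a b]; simpl. rewrite subst_id; auto.
Qed.

Definition maxl (l : list nat) : nat := fold_right max 0 l.
Lemma maxl_ge l x : In x l -> x <= maxl l.
Proof. induction l; simpl; [intros []|intros [->|H]; [lia| specialize (IHl H); lia]]. Qed.

End Clauses.

Section Ord.
Variables F P : Type.
Variable ar : F -> nat.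
Variable lt : atom F P -> atom F P -> Prop.
Hypothesis lt_irrefl : forall A, ~ lt A A.
Hypothesis lt_trans : forall A B C, lt A B -> lt B C -> lt A C.
Hypothesis lt_total : forall A B, ground_atom ar A -> ground_atom ar B -> A <> B -> lt A B \/ lt B A.

Lemma max_lit (l : list (lit F P)) : l <> [] -> (forall L, In L l -> ground_atom ar (lit_atom L)) ->
  exists L, In L l /\ forall L', In L' l -> lit_le lt L' L.
Proof.
  induction l as [|a l IH]; intros Hne HG; [congruence|].
  destruct l as [|b l].
  - exists a. split; simpl; auto. intros L' [<-|[]]; left; auto.
  - destruct IH as [M [HM HMax]]; [congruence| intros; apply HG; simpl; auto|].
    destruct (@lit_lt_total F P lt a M) as [<-|[H|H]].
    + intros Hn. apply lt_total; auto; apply HG; simpl; auto.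
    + exists a. split; simpl; auto. intros L' [<-|HL']; [left; auto| auto].
    + exists M. split; [simpl; auto|]. intros L' [<-|HL']; [right; auto| auto].
    + exists a. split; simpl; auto. intros L' [<-|HL']; [left; auto|].
      right. eapply lit_le_lt_trans; eauto.
Qed.

Lemma dom_lt (C D : clause F P) L :
  In L (lits C) -> (forall L', In L' (lits D) -> lit_lt lt L' L) -> clause_lt lt D C.
Proof.
  intros HL H. exists [], (lits C), (lits D). simpl. split; [auto|split; [auto|split]].
  - destruct (lits C); [destruct HL| congruence].
  - intros y Hy. exists L; auto.
Qed.

Lemma replace_lt (R C : clause F P) L Z Y :
  Permutation (lits C) (L :: Z) -> Permutation (lits R) (Y ++ Z) ->
  (forall y, In y Y -> lit_lt lt y L) -> clause_lt lt R C.
Proof.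
  intros H1 H2 H3. exists Z, [L], Y. split; [|split; [|split]].
  - eapply perm_trans; [exact H1|]. apply Permutation_cons_append.
  - eapply perm_trans; [exact H2|]. apply Permutation_app_comm.
  - congruence.
  - intros y Hy. exists L; simpl; auto.
Qed.

Lemma clause_lt_perm (C C' D D' : clause F P) :
  clause_perm C C' -> clause_perm D D' -> clause_lt lt C D -> clause_lt lt C' D'.
Proof. intros H1 H2 H. unfold clause_lt. eapply mul_lt_perm; [apply lits_perm|apply lits_perm|]; eauto. Qed.

Lemma wf_clause_lt : well_founded lt -> well_founded (clause_lt lt).
Proof.
  intros W. unfold clause_lt. apply wf_inverse_image with (f := @lits F P).
  apply wf_mul_lt, wf_lit_lt; auto.
Qed.

Lemma ground_atom_inst (dl : nat -> term F) (A : atom F P) :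
  grounding ar dl -> wf_atom ar A -> ground_atom ar (subst_atom dl A).
Proof.
  intros G W. unfold ground_atom, wf_atom in *.
  assert (E : atom_args (subst_atom dl A) = map (subst dl) (atom_args A)) by (destruct A; auto).
  rewrite E. rewrite Forall_map. eapply Forall_impl; [|exact W]. intros t Ht.
  destruct (ground_subst t G); auto.
Qed.

End Ord.

Section PermL.
Variables F P : Type.
Lemma PL1 (a b d : list (atom F P)) x :
  Permutation (lits (a ++ x :: b, d)) (Neg x :: lits (a ++ b, d)).
Proof.
  unfold lits; simpl. rewrite !map_app. simpl. rewrite <- !app_assoc. simpl.
  apply Permutation_sym, Permutation_middle.
Qed.
Lemma PL3 (g a b : list (atom F P)) x :
  Permutation (lits (g, a ++ x :: b)) (Pos x :: lits (g, a ++ b)).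
Proof.
  unfold lits; simpl. rewrite !map_app. simpl. rewrite app_assoc.
  apply Permutation_sym. rewrite app_assoc. apply Permutation_middle.
Qed.
Lemma PL2 (g a p d : list (atom F P)) :
  Permutation (lits (g ++ a, p ++ d)) (lits (g, p) ++ lits (a, d)).
Proof.
  unfold lits; simpl. rewrite !map_app. rewrite <- !app_assoc. apply Permutation_app_head.
  rewrite !app_assoc. apply Permutation_app_tail. apply Permutation_app_comm.
Qed.
End PermL.

Ltac inclt := let a := fresh "a" in let Ha := fresh "Ha" in intros a Ha;
  repeat (first [rewrite in_app_iff in Ha | rewrite in_app_iff | progress (cbn [In] in Ha) | progress (cbn [In])]);
  tauto.

Section Main.
Variables F P : Type.
Variable ar : F -> nat.
Variable lt : atom F P -> atom F P -> Prop.
Variable N : cclause F P -> Prop.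
Hypothesis lt_irrefl : forall A, ~ lt A A.
Hypothesis lt_trans : forall A B C, lt A B -> lt B C -> lt A C.
Hypothesis lt_total : forall A B, ground_atom ar A -> ground_atom ar B -> A <> B -> lt A B \/ lt B A.
Hypothesis Hmsl : forall Cp, N Cp -> msl_clause ar Cp.
Hypothesis Hsat : saturated ar lt N.
Variable Iof : clause F P -> atom F P -> Prop.
Hypothesis Hspec : is_partial_model_fun ar lt N Iof.

Notation IN := (I_N ar lt N Iof).
Definition inst (Cp : cclause F P) dl := subst_clause dl (fst Cp).

Lemma msl_parts G D pi : N ((G, D), pi) ->
  Forall (wf_atom ar) G /\ Forall (wf_atom ar) D /\ is_SDC ar pi.
Proof. intros H. apply Hmsl in H. simpl in H. tauto. Qed.

Lemma Iof_IN C0 d0 A : ginst ar N C0 d0 -> Iof (inst C0 d0) A -> IN A.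
Proof.
  intros H HA. apply (Hspec H) in HA as [Cp [dl [H1 [_ H2]]]]. exists Cp, dl; auto.
Qed.

Lemma smaller_in C0 d0 Cp dl A : ginst ar N C0 d0 -> ginst ar N Cp dl ->
  clause_lt lt (inst Cp dl) (inst C0 d0) -> produces ar lt Iof Cp dl A -> Iof (inst C0 d0) A.
Proof. intros H0 H1 H2 H3. apply (Hspec H0). exists Cp, dl; auto. Qed.

Lemma prod_lits Cp dl A : produces ar lt Iof Cp dl A ->
  forall L, In L (lits (inst Cp dl)) -> lit_le lt L (Pos A).
Proof.
  intros [[G [Da [Db [E H]]]] _] L HL. unfold inst in HL. rewrite E in HL.
  apply Permutation_in with (l' := Pos A :: lits (G, Da ++ Db)) in HL; [|apply PL3].
  destruct HL as [<-|HL]; [left; auto| right; auto].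
Qed.

Lemma prod_below Cp dl A L D : produces ar lt Iof Cp dl A -> In L (lits D) ->
  lit_lt lt (Pos A) L -> clause_lt lt (inst Cp dl) D.
Proof.
  intros Hp HL Hlt. apply dom_lt with L; auto. intros L' HL'.
  eapply lit_le_lt_trans; eauto. eapply prod_lits; eauto.
Qed.

Lemma neg_in_Iof C0 d0 B : ginst ar N C0 d0 -> In B (fst (inst C0 d0)) -> IN B -> Iof (inst C0 d0) B.
Proof.
  intros H0 HB [Cp [dl [H1 H2]]]. eapply smaller_in; eauto.
  eapply prod_below; eauto.
  - apply In_lits. left. eauto.
  - apply lit_lt_pos_neg.
Qed.

Lemma producer_false Cp dl A : ginst ar N Cp dl -> produces ar lt Iof Cp dl A ->
  exists G Da Db, inst Cp dl = (G, Da ++ A :: Db) /\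
    (forall L, In L (lits (G, Da ++ Db)) -> lit_lt lt L (Pos A)) /\
    (forall B, In B G -> IN B) /\ (forall B, In B (Da ++ Db) -> ~ IN B).
Proof.
  intros Hg Hp. pose proof Hp as [[G [Da [Db [E H]]]] [Hsel Hng]].
  exists G, Da, Db. split; auto. split; auto.
  change (~ gsat (Iof (inst Cp dl)) (inst Cp dl)) in Hng.
  apply ngsat in Hng as [HD HG].
  assert (E1 : fst (inst Cp dl) = G) by (unfold inst; rewrite E; auto).
  assert (E2 : snd (inst Cp dl) = Da ++ A :: Db) by (unfold inst; rewrite E; auto).
  rewrite E1 in HG. rewrite E2 in HD.
  split.
  - intros B HB. eapply Iof_IN; eauto.
  - intros B HB [Cp2 [dl2 [Hg2 Hp2]]]. apply (HD B).
    + apply in_app_iff in HB as [HB|HB]; apply in_app_iff; simpl; auto.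
    + eapply smaller_in; eauto. eapply prod_below; eauto.
      * apply In_lits. right. exists A. split; auto. rewrite E2. apply in_app_iff; simpl; auto.
      * apply H. apply In_lits. right. exists B; auto.
Qed.

Definition contra_ok (Dt : clause F P) : Prop :=
  forall R RD, (redundant ar lt N R \/ ground_included ar N R) -> ground_instance ar R RD ->
    clause_lt lt RD Dt -> ~ gsat IN RD -> False.

Lemma res_case G2a B G2b D2 pi2 d2 :
  N ((G2a ++ B :: G2b, D2), pi2) -> solution ar d2 pi2 ->
  ~ gsat IN (subst_clause d2 (G2a ++ B :: G2b, D2)) ->
  contra_ok (subst_clause d2 (G2a ++ B :: G2b, D2)) ->
  (selected (G2a ++ B :: G2b, D2) B \/
   (sel_empty (G2a ++ B :: G2b, D2) /\
    forall L, In L (lits (G2a ++ G2b, D2)) -> lit_le lt (subst_lit d2 L) (Neg (subst_atom d2 B)))) ->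
  False.
Proof.
  intros HN2 Hs2 Hf Hc Hcond.
  pose proof Hf as Hf'. apply ngsat in Hf' as [HfD HfG]. unfold subst_clause in HfD, HfG; simpl in HfD, HfG.
  set (Bg := subst_atom d2 B).
  assert (HBg : IN Bg) by (apply HfG; rewrite map_app; apply in_app_iff; simpl; auto).
  destruct HBg as [C1 [d1 [[HN1 Hs1] Hprod]]].
  destruct (producer_false (conj HN1 Hs1) Hprod) as [G [Da [Db [Einst [Hlt [HGin HDout]]]]]].
  destruct C1 as [[G1 Dl1] pi1]. unfold inst, subst_clause in Einst; simpl in Einst.
  injection Einst as EG ED.
  apply map_eq_app in ED as [D1a [Dr [-> [EDa EDr]]]].
  apply map_eq_cons in EDr as [A1 [D1b [-> [EA EDb]]]].
  set (C2 := ((G2a ++ B :: G2b, D2), pi2) : cclause F P).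
  set (m := maxl (cclause_vars C2)).
  set (r1 := fun x => x + S m).
  set (rho := fun x => Var (r1 x) : term F).
  set (th := fun y => if m <? y then d1 (y - S m) else d2 y).
  assert (Hthr : forall x, th (r1 x) = d1 x).
  { intros x. unfold th, r1. destruct (m <? x + S m) eqn:E; [f_equal; lia|].
    apply Nat.ltb_ge in E. lia. }
  assert (Hth2 : forall x, In x (cclause_vars C2) -> th x = d2 x).
  { intros x Hx. unfold th. destruct (m <? x) eqn:E; auto. apply Nat.ltb_lt in E.
    apply maxl_ge in Hx. fold m in Hx. lia. }
  assert (Gth : grounding ar th).
  { destruct Hs1 as [G1' _]. destruct Hs2 as [G2' _]. intros x. unfold th. destruct (m <? x); auto. }
  destruct (msl_parts HN1) as [W1G [W1D S1]].
  destruct (msl_parts HN2) as [W2G [W2D S2]].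
  assert (Hcv : forall x, In x (clause_vars (fst C2)) -> In x (cclause_vars C2)).
  { intros x Hx. unfold cclause_vars. apply in_app_iff; auto. }
  assert (HthA : forall A, In A (G2a ++ B :: G2b) \/ In A D2 -> subst_atom th A = subst_atom d2 A).
  { intros A HA. apply subst_atom_ext. intros x Hx. apply Hth2, Hcv.
    destruct HA as [HA|HA]; [eapply atom_vars_clause_fst|eapply atom_vars_clause_snd]; simpl; eauto. }
  assert (HthL : forall L, In L (lits (fst C2)) -> subst_lit th L = subst_lit d2 L).
  { intros L HL. apply subst_lit_ext. intros x Hx. apply Hth2, Hcv. eapply atom_vars_clause; eauto. }
  assert (Hrho_t : forall t, subst th (subst rho t) = subst d1 t).
  { intros t. rewrite subst_comp. apply subst_ext. intros x _. unfold rho. simpl. auto. }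
  assert (Hrho_A : forall A : atom F P, subst_atom th (subst_atom rho A) = subst_atom d1 A).
  { intros A. rewrite subst_atom_comp. apply subst_atom_ext. intros x _. unfold rho. simpl. auto. }
  assert (Hrho_L : forall L : lit F P, subst_lit th (subst_lit rho L) = subst_lit d1 L).
  { intros L. destruct L; simpl; rewrite Hrho_A; auto. }
  set (A1' := subst_atom rho A1).
  assert (Hunif : subst_atom th A1' = subst_atom th B).
  { unfold A1'. rewrite Hrho_A, EA, HthA; auto. left. apply in_app_iff; simpl; auto. }
  destruct (atom_mgu _ _ _ Hunif) as [sg [Hmgu Hsg]].
  assert (Hpre : forall c, In c (subst_sdc rho pi1 ++ pi2) ->
            wf ar (fst c) /\ wf ar (snd c) /\ straight (snd c) /\ ~ instance_of (subst th (fst c)) (snd c)).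
  { intros c Hc'. apply in_app_iff in Hc' as [Hc'|Hc'].
    - unfold subst_sdc in Hc'. apply in_map_iff in Hc' as [c0 [<- Hc0]]. simpl.
      unfold is_SDC in S1. rewrite Forall_forall in S1. destruct (S1 c0 Hc0) as [St [Wl [Wr _]]].
      split; [apply wf_subst; auto; intros; simpl; auto|]. split; auto. split; auto.
      rewrite Hrho_t. destruct Hs1 as [_ Hs1]. rewrite Forall_forall in Hs1. apply Hs1; auto.
    - unfold is_SDC in S2. rewrite Forall_forall in S2. destruct (S2 c Hc') as [St [Wl [Wr _]]].
      split; auto. split; auto. split; auto.
      rewrite (subst_ext th d2). { destruct Hs2 as [_ Hs2]. rewrite Forall_forall in Hs2. apply Hs2; auto. }
      intros x Hx. apply Hth2. unfold cclause_vars. apply in_app_iff. right.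
      unfold sdc_lhs_vars. apply in_flat_map. eauto. }
  assert (Hsgt : forall t, subst th (subst sg t) = subst th t).
  { intros t. rewrite subst_comp. apply subst_ext. intros; symmetry; auto. }
  assert (Hpre' : forall c, In c (subst_sdc sg (subst_sdc rho pi1 ++ pi2)) ->
            wf ar (subst th (fst c)) /\ wf ar (snd c) /\ straight (snd c) /\ ~ instance_of (subst th (fst c)) (snd c)).
  { intros c Hc'. unfold subst_sdc at 1 in Hc'. apply in_map_iff in Hc' as [c0 [<- Hc0]]. simpl.
    rewrite Hsgt. destruct (Hpre c0 Hc0) as [H1 [H2 [H3 H4]]]. split; auto.
    apply wf_subst; auto. intros; apply Gth. }
  destruct (norm_exists (Some (subst_sdc sg (subst_sdc rho pi1 ++ pi2)))) as [o [Hrt Hirr]].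
  destruct (crt_sound Gth Hrt) as [pi' [-> [_ Hsol']]].
  { intros c Hc'. destruct (Hpre' c Hc'); tauto. }
  { intros c Hc'. apply Hpre'; auto. }
  assert (Hsol : solution ar th pi').
  { split; auto. apply Forall_forall. auto. }
  assert (HsolA : forall pi0, incl pi0 (subst_sdc rho pi1 ++ pi2) -> solution ar th (subst_sdc sg pi0)).
  { intros pi0 Hi. split; auto. apply Forall_forall. intros c Hc'.
    unfold subst_sdc in Hc'. apply in_map_iff in Hc' as [c0 [<- Hc0]]. simpl. rewrite Hsgt.
    apply Hpre; auto. }
  set (R := (subst_clause sg (map (subst_atom rho) G1 ++ G2a ++ G2b,
                              map (subst_atom rho) D1a ++ map (subst_atom rho) D1b ++ D2), pi')).
  assert (HselC1 : sel_empty (G1, D1a ++ A1 :: D1b)) by (destruct Hprod as [_ [Hsel _]]; exact Hsel).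
  assert (Hres : sdc_resolution ar lt (rename r1 ((G1, D1a ++ A1 :: D1b), pi1)) C2 R).
  { exists (map (subst_atom rho) G1), (map (subst_atom rho) D1a), A1', (map (subst_atom rho) D1b),
      (subst_sdc rho pi1), G2a, B, G2b, D2, pi2, sg, pi'.
    split; [unfold rename, subst_clause; simpl; rewrite map_app; reflexivity|].
    split; [reflexivity|].
    split.
    { intros x H1 H2. apply cclause_vars_rename in H1 as [y ->]. apply maxl_ge in H2. fold m in H2.
      unfold r1 in H2. lia. }
    split; [auto|]. split; [split; auto|]. split; [exists th; auto|].
    split.
    { exists th. split; [apply HsolA; intros c Hc'; apply in_app_iff; auto|].
      intros L HL. apply in_map_iff in HL as [L1 [<- HL1]].
      assert (E : (map (subst_atom rho) G1, map (subst_atom rho) D1a ++ map (subst_atom rho) D1b)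
                  = subst_clause rho (G1, D1a ++ D1b)) by (unfold subst_clause; simpl; rewrite map_app; auto).
      rewrite E, lits_subst in HL1. apply in_map_iff in HL1 as [L0 [<- HL0]].
      simpl. rewrite subst_lit_mgu, subst_atom_mgu; auto. unfold A1'. rewrite Hrho_A, Hrho_L, EA.
      apply Hlt. rewrite <- EG, <- EDa, <- EDb, <- map_app.
      change (In (subst_lit d1 L0) (lits (subst_clause d1 (G1, D1a ++ D1b)))).
      rewrite lits_subst. apply in_map; auto. }
    split.
    { intros B' HB'. assert (E : (map (subst_atom rho) G1, map (subst_atom rho) D1a ++ A1' :: map (subst_atom rho) D1b)
                  = subst_clause rho (G1, D1a ++ A1 :: D1b)) by (unfold subst_clause; simpl; rewrite map_app; auto).
      rewrite E in HB'. apply sel_rename in HB' as [B0 HB0]; [|intros x y; unfold r1; lia].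
      eapply HselC1; eauto. }
    split; [|reflexivity].
    destruct Hcond as [Hcond|[Hse Hmax]]; [left; auto|right]. split; auto.
    exists th. split; [apply HsolA; intros c Hc'; apply in_app_iff; auto|].
    intros L HL. apply in_map_iff in HL as [L0 [<- HL0]]. simpl.
    rewrite subst_lit_mgu, subst_atom_mgu; auto.
    rewrite HthL, HthA.
    - apply Hmax; auto.
    - left. apply in_app_iff; simpl; auto.
    - apply In_lits in HL0 as [[A [-> HA]]|[A [-> HA]]]; apply In_lits; [left|right]; exists A; split; auto;
      simpl in *; auto. apply in_app_iff in HA as [HA|HA]; apply in_app_iff; simpl; auto. }
  destruct Hsat as [Hsr _].
  assert (Hv1 : is_variant ((G1, D1a ++ A1 :: D1b), pi1) (rename r1 ((G1, D1a ++ A1 :: D1b), pi1))).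
  { exists r1. split; auto. intros x y; unfold r1; lia. }
  assert (Hv2 : is_variant C2 C2) by (exists (fun x => x); split; auto; symmetry; apply rename_id).
  specialize (Hsr _ _ _ _ R HN1 HN2 Hv1 Hv2 Hres).
  set (RD := subst_clause th (fst R)).
  assert (Hgi : ground_instance ar R RD) by (exists th; split; auto).
  assert (ERD : RD = (G ++ (map (subst_atom d2) G2a ++ map (subst_atom d2) G2b),
                      (Da ++ Db) ++ map (subst_atom d2) D2)).
  { unfold RD, R. simpl. rewrite subst_clause_mgu; auto. unfold subst_clause; simpl.
    rewrite !map_app, !map_map. rewrite <- EG, <- EDa, <- EDb, <- !app_assoc. f_equal; f_equal.
    - apply map_ext; auto.
    - f_equal; apply map_ext_in; intros A HA; apply HthA; left; apply in_app_iff; simpl; auto.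
    - apply map_ext; auto.
    - f_equal; [apply map_ext; auto|]. apply map_ext_in; intros A HA; apply HthA; right; auto. }
  apply (Hc R RD Hsr Hgi).
  - apply replace_lt with (L := Neg Bg) (Z := lits (map (subst_atom d2) G2a ++ map (subst_atom d2) G2b, map (subst_atom d2) D2))
      (Y := lits (G, Da ++ Db)).
    + unfold subst_clause; simpl. rewrite map_app. simpl. apply PL1.
    + rewrite ERD. apply PL2.
    + intros y Hy. apply (@lit_lt_trans F P lt lt_trans y (Pos Bg) (Neg Bg)); [apply Hlt; auto|].
      apply lit_lt_pos_neg.
  - rewrite ERD. apply ngsat. simpl. split.
    + intros A HA. apply in_app_iff in HA as [HA|HA]; [apply HDout; auto|].
      apply HfD; auto.
    + intros A HA. apply in_app_iff in HA as [HA|HA]; [apply HGin; auto|].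
      apply HfG. rewrite map_app. simpl. apply in_app_iff in HA as [HA|HA]; apply in_app_iff; simpl; auto.
Qed.

Lemma fac_case G Da X Db Y Dc pi d :
  N ((G, Da ++ X :: Db ++ Y :: Dc), pi) -> solution ar d pi ->
  subst_atom d X = subst_atom d Y ->
  ~ gsat IN (subst_clause d (G, Da ++ X :: Db ++ Y :: Dc)) ->
  contra_ok (subst_clause d (G, Da ++ X :: Db ++ Y :: Dc)) ->
  sel_empty (G, Da ++ X :: Db ++ Y :: Dc) ->
  (forall L, In L (lits (G, Da ++ Db ++ Y :: Dc)) -> lit_le lt (subst_lit d L) (Pos (subst_atom d X))) ->
  False.
Proof.
  intros HN Hs Hxy Hf Hc Hse Hmax.
  pose proof Hf as Hf'. apply ngsat in Hf' as [HfD HfG]. unfold subst_clause in HfD, HfG; simpl in HfD, HfG.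
  destruct (atom_mgu _ _ _ Hxy) as [sg [Hmgu Hsg]].
  destruct (msl_parts HN) as [WG [WD S]].
  assert (Gd : grounding ar d) by (destruct Hs; auto).
  assert (Hsgt : forall t, subst d (subst sg t) = subst d t).
  { intros t. rewrite subst_comp. apply subst_ext. intros; symmetry; auto. }
  assert (Hpre' : forall c, In c (subst_sdc sg pi) ->
            wf ar (subst d (fst c)) /\ wf ar (snd c) /\ straight (snd c) /\ ~ instance_of (subst d (fst c)) (snd c)).
  { intros c Hc'. unfold subst_sdc in Hc'. apply in_map_iff in Hc' as [c0 [<- Hc0]]. simpl.
    rewrite Hsgt. unfold is_SDC in S. rewrite Forall_forall in S. destruct (S c0 Hc0) as [St [Wl [Wr _]]].
    split; [apply wf_subst; auto; intros; apply Gd|]. split; auto. split; auto.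
    destruct Hs as [_ Hs]. rewrite Forall_forall in Hs. apply Hs; auto. }
  destruct (norm_exists (Some (subst_sdc sg pi))) as [o [Hrt Hirr]].
  destruct (crt_sound Gd Hrt) as [pi' [-> [_ Hsol']]].
  { intros c Hc'. destruct (Hpre' c Hc'); tauto. }
  { intros c Hc'. apply Hpre'; auto. }
  assert (Hsol : solution ar d pi') by (split; auto; apply Forall_forall; auto).
  set (R := (subst_clause sg (G, Da ++ X :: Db ++ Dc), pi')).
  assert (Hfac : sdc_factoring ar lt ((G, Da ++ X :: Db ++ Y :: Dc), pi) R).
  { exists G, Da, X, Db, Y, Dc, pi, sg, pi'.
    split; [reflexivity|]. split; [auto|]. split; [auto|].
    split.
    { exists d. split; [split; auto; apply Forall_forall; intros; apply Hpre'; auto|].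
      intros L HL. apply in_map_iff in HL as [L0 [<- HL0]]. simpl.
      rewrite subst_lit_mgu, subst_atom_mgu; auto. }
    split; [split; auto|]. split; [exists d; auto| reflexivity]. }
  destruct Hsat as [_ Hsf]. specialize (Hsf _ R HN Hfac).
  set (RD := subst_clause d (fst R)).
  assert (Hgi : ground_instance ar R RD) by (exists d; split; auto).
  assert (ERD : RD = (map (subst_atom d) G,
     (map (subst_atom d) Da ++ subst_atom d X :: map (subst_atom d) Db) ++ map (subst_atom d) Dc)).
  { unfold RD, R. simpl. rewrite subst_clause_mgu; auto. unfold subst_clause; simpl.
    rewrite !map_app. simpl. rewrite !map_app. rewrite <- !app_assoc. reflexivity. }
  assert (ECi : subst_clause d (G, Da ++ X :: Db ++ Y :: Dc) = (map (subst_atom d) G,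
     (map (subst_atom d) Da ++ subst_atom d X :: map (subst_atom d) Db) ++ subst_atom d Y :: map (subst_atom d) Dc)).
  { unfold subst_clause; simpl. rewrite !map_app. simpl. rewrite !map_app. simpl. rewrite <- !app_assoc. reflexivity. }
  apply (Hc R RD Hsf Hgi).
  - apply replace_lt with (L := Pos (subst_atom d Y)) (Z := lits RD) (Y := []).
    + rewrite ECi, ERD. apply PL3.
    + simpl. apply Permutation_refl.
    + intros y [].
  - apply ngsat in Hf. rewrite ECi in Hf. destruct Hf as [HfD' HfG'].
    rewrite ERD. apply ngsat. simpl. split.
    + intros A HA. apply HfD'. simpl. apply in_app_iff in HA as [HA|HA]; apply in_app_iff; simpl; auto.
    + intros A HA. apply HfG'; auto.
Qed.

Lemma prod_case G Da A Db pi d :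
  N ((G, Da ++ A :: Db), pi) -> solution ar d pi ->
  ~ gsat IN (subst_clause d (G, Da ++ A :: Db)) ->
  sel_empty (G, Da ++ A :: Db) ->
  (forall L, In L (lits (G, Da ++ Db)) -> lit_lt lt (subst_lit d L) (Pos (subst_atom d A))) ->
  False.
Proof.
  intros HN Hs Hf Hse Hlt.
  pose proof Hf as Hf'. apply ngsat in Hf' as [HfD HfG].
  set (C := ((G, Da ++ A :: Db), pi)).
  assert (Hg : ginst ar N C d) by (split; auto).
  assert (Hp : produces ar lt Iof C d (subst_atom d A)).
  { split; [|split; [auto|]].
    - exists (map (subst_atom d) G), (map (subst_atom d) Da), (map (subst_atom d) Db). split.
      + unfold C, subst_clause; simpl. rewrite map_app; reflexivity.
      + intros L HL. replace (map (subst_atom d) G, map (subst_atom d) Da ++ map (subst_atom d) Db)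
          with (subst_clause d (G, Da ++ Db)) in HL by (unfold subst_clause; simpl; rewrite map_app; auto).
        rewrite lits_subst in HL. apply in_map_iff in HL as [L0 [<- HL0]]. auto.
    - change (~ gsat (Iof (inst C d)) (inst C d)). apply ngsat. split.
      + intros B HB HI. apply (HfD B); auto. eapply Iof_IN; eauto.
      + intros B HB. apply neg_in_Iof; auto. }
  apply (HfD (subst_atom d A)).
  - unfold subst_clause; simpl. rewrite map_app. apply in_app_iff; simpl; auto.
  - exists C, d. split; auto.
Qed.

Lemma lits_incl (G1 G2 D1 D2 : list (atom F P)) L :
  incl G1 G2 -> incl D1 D2 -> In L (lits (G1, D1)) -> In L (lits (G2, D2)).
Proof.
  intros H1 H2 HL. apply In_lits in HL as [[A [-> HA]]|[A [-> HA]]]; apply In_lits; [left|right];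
  exists A; split; auto; simpl in *; auto.
Qed.

Lemma main_model : ~ in_groundN ar N empty_clause -> well_founded lt ->
  forall D, in_groundN ar N D -> gsat IN D.
Proof.
  intros Hne Hwf D.
  induction D as [D IH] using (well_founded_induction (wf_clos_trans _ _ (wf_clause_lt Hwf))).
  intros [Cp [D' [HN [[d [Hs ->]] Hperm]]]].
  apply gsat_perm with (subst_clause d (fst Cp)); auto.
  apply NNPP; intros Hf.
  destruct Cp as [[G Dl] pi]. simpl in *.
  assert (Prefl : forall C : clause F P, clause_perm C C) by (intros; split; apply Permutation_refl).
  assert (Hlt_D : forall RD, clause_lt lt RD (subst_clause d (G, Dl)) -> clos_trans _ (clause_lt lt) RD D).
  { intros RD H. apply t_step. eapply clause_lt_perm; [apply Prefl|exact Hperm|exact H]. }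
  assert (Hc : contra_ok (subst_clause d (G, Dl))).
  { intros R RD Hr Hgi Hlt Hng. destruct Hr as [Hr|Hr].
    - destruct (Hr RD Hgi) as [Ds [HDs Hent]]. apply Hng. apply Hent. intros Di HDi.
      destruct (HDs Di HDi) as [Hin Hlt']. apply IH; auto. apply t_trans with RD; [apply t_step; auto|].
      apply Hlt_D; auto.
    - apply Hng. apply IH; auto. }
  pose proof Hf as Hf'. apply ngsat in Hf' as [HfD HfG].
  destruct (msl_parts HN) as [WG [WD S]].
  assert (Gd : grounding ar d) by (destruct Hs; auto).
  destruct (classic (exists B, selected (G, Dl) B)) as [[B HB]|Hnsel].
  - pose proof HB as [HBin _]. simpl in HBin. apply in_split in HBin as [G2a [G2b ->]].
    eapply res_case; eauto.
  - assert (Hse : sel_empty (G, Dl)) by (intros B HB; apply Hnsel; eauto).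
    destruct (@max_lit F P ar lt lt_trans lt_total (lits (subst_clause d (G, Dl)))) as [M [HM Hmax]].
    { intros E. apply Hne. exists ((G, Dl), pi), (subst_clause d (G, Dl)). split; auto. split.
      - exists d; auto.
      - destruct G, Dl; try discriminate. apply Prefl. }
    { intros L HL. rewrite lits_subst in HL. apply in_map_iff in HL as [L0 [<- HL0]].
      rewrite lit_atom_subst. apply ground_atom_inst; auto.
      apply In_lits in HL0 as [[A [-> HA]]|[A [-> HA]]]; simpl in *;
      [rewrite Forall_forall in WG|rewrite Forall_forall in WD]; auto. }
    assert (HmaxL : forall L0, In L0 (lits (G, Dl)) -> lit_le lt (subst_lit d L0) M).
    { intros L0 HL0. apply Hmax. rewrite lits_subst. apply in_map; auto. }
    rewrite lits_subst in HM. apply in_map_iff in HM as [M0 [<- HM0]].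
    apply In_lits in HM0 as [[B [-> HB]]|[A [-> HA]]].
    + simpl in HB. apply in_split in HB as [G2a [G2b ->]].
      eapply res_case; eauto. right. split; auto.
      intros L HL. apply (HmaxL L). eapply lits_incl; [| |exact HL]; intros a Ha; auto.
      apply in_app_iff in Ha as [Ha|Ha]; apply in_app_iff; simpl; auto.
    + simpl in HA. apply in_split in HA as [Da [Db HDl]].
      destruct (classic (forall L, In L (lits (G, Da ++ Db)) -> lit_lt lt (subst_lit d L) (Pos (subst_atom d A))))
        as [Hall|Hnall].
      * subst Dl. eapply prod_case; eauto.
      * apply not_all_ex_not in Hnall as [L0 HL0].
        apply imply_to_and in HL0 as [HL0 Hnlt].
        assert (Hle : lit_le lt (subst_lit d L0) (Pos (subst_atom d A))).
        { apply HmaxL. subst Dl. eapply lits_incl; [| |exact HL0]; intros a Ha; auto.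
          apply in_app_iff in Ha as [Ha|Ha]; apply in_app_iff; simpl; auto. }
        destruct Hle as [Heq|Hlt']; [|contradiction].
        apply In_lits in HL0 as [[B [-> HB]]|[B [-> HB]]]; simpl in Heq; [discriminate|].
        injection Heq as HdB. simpl in HB.
        apply in_app_iff in HB as [HB|HB].
        -- apply in_split in HB as [Da1 [Da2 ->]].
           assert (E : Dl = Da1 ++ B :: Da2 ++ A :: Db) by (rewrite HDl, <- app_assoc; reflexivity).
           rewrite E in HN, Hf, Hc, Hse, HmaxL.
           eapply fac_case; [exact HN | exact Hs | exact HdB | exact Hf | exact Hc | exact Hse |].
           intros L HL. rewrite HdB. apply HmaxL. eapply lits_incl; [| |exact HL]; [intros a Ha; auto|inclt].
        -- apply in_split in HB as [Db1 [Db2 ->]].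
           rewrite HDl in HN, Hf, Hc, Hse, HmaxL.
           eapply fac_case; [exact HN | exact Hs | exact (eq_sym HdB) | exact Hf | exact Hc | exact Hse |].
           intros L HL. apply HmaxL. eapply lits_incl; [| |exact HL]; [intros a Ha; auto|inclt].
Qed.

End Main.

Section Exist.
Variables F P : Type.
Variable ar : F -> nat.
Variable lt : atom F P -> atom F P -> Prop.
Variable N : cclause F P -> Prop.
Hypothesis Hwf : well_founded lt.

Definition Fbody (D : clause F P) (rec : forall D', clause_lt lt D' D -> atom F P -> Prop) : atom F P -> Prop :=
  fun A => exists Cp dl (H : clause_lt lt (subst_clause dl (fst Cp)) D), ginst ar N Cp dl /\
    (exists G Da Db, subst_clause dl (fst Cp) = (G, Da ++ A :: Db) /\
       forall L, In L (lits (G, Da ++ Db)) -> lit_lt lt L (Pos A)) /\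
    sel_empty (fst Cp) /\ ~ gsat (rec _ H) (subst_clause dl (fst Cp)).

Definition Iof0 : clause F P -> atom F P -> Prop :=
  Fix (wf_clause_lt Hwf) (fun _ => atom F P -> Prop) Fbody.

Lemma Iof0_eq D : Iof0 D = @Fbody D (fun D' _ => Iof0 D').
Proof.
  unfold Iof0. apply (Fix_eq (wf_clause_lt Hwf) (fun _ => atom F P -> Prop) (@Fbody)). intros x f g Hfg. unfold Fbody.
  apply functional_extensionality. intros A. apply propositional_extensionality.
  split; intros [Cp [dl [H [H1 [H2 [H3 H4]]]]]]; exists Cp, dl, H; (split; [auto|split; [auto|split; auto]]);
  [rewrite <- Hfg| rewrite Hfg]; auto.
Qed.

Lemma Iof_exists : exists Iof, is_partial_model_fun ar lt N Iof.
Proof.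
  exists Iof0. intros C0 d0 _ A. rewrite Iof0_eq. unfold Fbody. split.
  - intros [Cp [dl [H [H1 [H2 [H3 H4]]]]]]. exists Cp, dl. split; auto. split; auto. split; auto.
  - intros [Cp [dl [H1 [H [H2 [H3 H4]]]]]]. exists Cp, dl, H. auto.
Qed.
End Exist.

Theorem lemma3 (F P : Type) (arity : F -> nat) (lt : atom F P -> atom F P -> Prop)
  (N : cclause F P -> Prop) :
  atom_ordering arity lt ->
  (forall Cp, N Cp -> msl_clause arity Cp) ->
  saturated arity lt N ->
  ((~ satisfiable arity N) <-> in_groundN arity N empty_clause) /\
  (~ in_groundN arity N empty_clause ->
     (exists Iof, is_partial_model_fun arity lt N Iof) /\
     (forall Iof, is_partial_model_fun arity lt N Iof ->
        forall Cp, N Cp -> cmodels arity (I_N arity lt N Iof) Cp)).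
Proof.
  intros [Hirr [Htr [Hwf [Htot _]]]] Hmsl Hsat.
  assert (Part2 : ~ in_groundN arity N empty_clause ->
     (exists Iof, is_partial_model_fun arity lt N Iof) /\
     (forall Iof, is_partial_model_fun arity lt N Iof ->
        forall Cp, N Cp -> cmodels arity (I_N arity lt N Iof) Cp)).
  { intros Hne. split; [apply Iof_exists; auto|].
    intros Iof Hspec Cp HN D HD. eapply main_model; eauto.
    exists Cp, D. split; auto. split; auto. split; apply Permutation_refl. }
  split; auto. split.
  - intros Hunsat. apply NNPP. intros Hne. apply Hunsat.
    destruct (Part2 Hne) as [[Iof Hspec] Hm]. exists (I_N arity lt N Iof). intros Cp HN. apply Hm; auto.
  - intros [Cp [D' [HN [HD [P1 P2]]]]] [I HI]. specialize (HI Cp HN D' HD).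
    simpl in P1, P2. apply Permutation_sym, Permutation_nil in P1. apply Permutation_sym, Permutation_nil in P2.
    destruct D' as [g dd]. simpl in P1, P2. subst. destruct HI as [[A [[] _]]|[A [[] _]]].
Qed.
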